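(* Let $M=\langle W,W^\bot,\preceq,R,V\rangle$ be a $\mathsf{CK}$-model, $w\in W$, and $\varphi$ a well-named $\mu$-sentence. Then (1) $\mathsf I$ has a winning strategy for $\mathcal G(M,w\models\varphi)$ if and only if $M,w\models\varphi$; and (2) $\mathsf{II}$ has a winning strategy for $\mathcal G(M,w\models\varphi)$ if and only if $M,w\not\models\varphi$.
   Context: Syntax. Fix disjoint sets $\mathrm{Prop}$ (propositions) and $\mathrm{Var}$ (propositional variables). $\mu$-formulas are given by $\varphi::=P\mid X\mid\bot\mid\varphi\land\varphi\mid\varphi\lor\varphi\mid\varphi\to\varphi\mid\Box\varphi\mid\Diamond\varphi\mid\mu X.\varphi\mid\nu X.\varphi$ with $P\in\mathrm{Prop}$, $X\in\mathrm{Var}$, where $\mu X.\varphi$ and $\nu X.\varphi$ may only be formed when $X$ is positive in $\varphi$. Positivity/negativity is defined inductively: $X$ is both positive and negative in $P$, in $\bot$, and in any variable $Y\neq X$; $X$ is positive in $X$; if $X$ is positive (resp. negative) in $\varphi$ and $\psi$, then it is positive (resp. negative) in $\varphi\land\psi$, $\varphi\lor\psi$, $\Box\varphi$, $\Diamond\varphi$; if $X$ is negative (resp. positive) in $\varphi$ and positive (resp. negative) in $\psi$, then $X$ is positive (resp. negative) in $\varphi\to\psi$; $X$ is both positive and negative in $\mu X.\varphi$ and $\nu X.\varphi$. $\eta$ ranges over $\{\mu,\nu\}$. A sentence has no free variables. $\mathrm{Sub}(\varphi)$ is the set of subformulas. $\varphi$ is guarded if for every subformula $\eta X.\psi$, every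 occurrence of $X$ in $\psi$ is in the scope of $\Box$ or $\Diamond$; well-bounded if each variable occurring bound in $\varphi$ is bound by exactly one fixed-point operator $\eta X$ in $\varphi$; well-named if guarded and well-bounded. For well-named $\varphi$ and a subformula $\eta X.\psi$, write $\psi_X:=\psi$. Models. A $\mathsf{CK}$-model is $M=\langle W,W^\bot,\preceq,R,V\rangle$ with $W\neq\emptyset$, $W^\bot\subseteq W$ (fallible worlds), $\preceq$ a reflexive transitive relation on $W$, $R$ a binary relation on $W$, and $V:\mathrm{Prop}\to\mathcal P(W)$, such that: $w\preceq v$ and $w\in V(P)$ imply $v\in V(P)$; $W^\bot\subseteq V(P)$ for all $P$; and $W^\bot$ is closed under $\preceq$ and $R$. $M[X\mapsto A]$ denotes $M$ with $V(X):=A$. Semantics. $w\preceq;R\,u$ means there is $v$ with $w\preceq v$ and $vRu$. $\|P\|=V(P)$; $\|\bot\|=W^\bot$; $\|\varphi\land\psi\|=\|\varphi\|\cap\|\psi\|$; $\|\varphi\lor\psi\|=\|\varphi\|\cup\|\psi\|$; $\|\varphi\to\psi\|=\{w\mid\forall v\,(w\preceq v\wedge v\in\|\varphi\|\Rightarrow v\in\|\psi\|)\}$; $\|\Box\varphi\|=\{w\mid\forall u\,(w\preceq;R\,u\Rightarrow u\in\|\varphi\|)\}$; $\|\Diamond\varphi\|=\{w\mid\forall v\,(w\preceq v\Rightarrow\exists u\,(vRu\wedge u\in\|\varphi\|))\}$; $\|\mu X.\varphi\|$, $\|\nu X.\varphi\|$ are the least and greatest fixed points of $A\mapsto\|\varphi\|^{M[X\mapsto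 A]}$. $M,w\models\varphi$ means $w\in\|\varphi\|^M$. Evaluation game $\mathcal G(M,w\models\varphi)$. Two players $\mathsf I,\mathsf{II}$ hold the two roles Verifier ($\mathsf V$) and Refuter ($\mathsf R$), always different; $\bar{\mathsf Q}$ is the role dual to $\mathsf Q$. Positions are $\langle v,\psi,\mathsf Q\rangle$ with $v\in W$, $\psi\in\mathrm{Sub}(\varphi)$, plus auxiliary positions $\langle v,\hat\Diamond\psi,\mathsf Q\rangle$ for $\Diamond\psi\in\mathrm{Sub}(\varphi)$ and $\langle v,\psi?\theta,\mathsf Q\rangle$ for $\psi\to\theta\in\mathrm{Sub}(\varphi)$; $\mathsf Q$ is the current role of $\mathsf I$ ($\mathsf{II}$ has $\bar{\mathsf Q}$). Initial position $\langle w,\varphi,\mathsf V\rangle$. Each position is owned by the player holding the indicated role, who picks the next position from the listed set: Owned by the Verifier role: $\langle v,P,\mathsf Q\rangle$ with $v\notin V(P)$: no moves; $\langle v,\bot,\mathsf Q\rangle$ with $v\notin W^\bot$: no moves; $\langle v,\psi\lor\theta,\mathsf Q\rangle\to\{\langle v,\psi,\mathsf Q\rangle,\langle v,\theta,\mathsf Q\rangle\}$; $\langle v,\psi?\theta,\mathsf Q\rangle\to\{\langle v,\psi,\bar{\mathsf Q}\rangle,\langle v,\theta,\mathsf Q\rangle\}$; $\langle v,\hat\Diamond\psi,\mathsf Q\rangle\to\{\langle u,\psi,\mathsf Q\rangle\mid vRu\}$; $\langle v,\mu X.\psi_X,\mathsf Q\rangle\to\{\langle v,\psi_X,\mathsf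 Q\rangle\}$; $\langle v,X,\mathsf Q\rangle\to\{\langle v,\mu X.\psi_X,\mathsf Q\rangle\}$ when $X$ is bound by $\mu$. Owned by the Refuter role: $\langle v,P,\mathsf Q\rangle$ with $v\in V(P)$: no moves; $\langle v,\bot,\mathsf Q\rangle$ with $v\in W^\bot$: no moves; $\langle v,\psi\land\theta,\mathsf Q\rangle\to\{\langle v,\psi,\mathsf Q\rangle,\langle v,\theta,\mathsf Q\rangle\}$; $\langle v,\psi\to\theta,\mathsf Q\rangle\to\{\langle u,\psi?\theta,\mathsf Q\rangle\mid v\preceq u\}$; $\langle v,\Box\psi,\mathsf Q\rangle\to\{\langle u,\psi,\mathsf Q\rangle\mid v\preceq;R\,u\}$; $\langle v,\Diamond\psi,\mathsf Q\rangle\to\{\langle u,\hat\Diamond\psi,\mathsf Q\rangle\mid v\preceq u\}$; $\langle v,\nu X.\psi_X,\mathsf Q\rangle\to\{\langle v,\psi_X,\mathsf Q\rangle\}$; $\langle v,X,\mathsf Q\rangle\to\{\langle v,\nu X.\psi_X,\mathsf Q\rangle\}$ when $X$ is bound by $\nu$. A run is a maximal (finite or infinite) sequence of positions starting at the initial position, each obtained by a legal move. The move from $\langle v,X,\mathsf Q\rangle$ to $\langle v,\eta X.\psi_X,\mathsf Q\rangle$ regenerates $\eta X.\psi_X$. A fixed-point subformula $\eta X.\psi_X$ is owned by $\mathsf I$ if some position $\langle v,\eta X.\psi_X,\mathsf Q\rangle$ is reachable and either ($\mathsf Q=\mathsf V$ and $\eta=\nu$) or ($\mathsf Q=\mathsf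 R$ and $\eta=\mu$); otherwise it is owned by $\mathsf{II}$. Winning: in a finite run, the owner of the last position (who has no move) loses. In an infinite run, let $\eta X.\psi_X$ be the outermost fixed-point formula regenerated infinitely often (every other infinitely often regenerated fixed-point formula is a subformula of it); $\mathsf I$ wins iff $\mathsf I$ owns $\eta X.\psi_X$, otherwise $\mathsf{II}$ wins. A (positional) strategy for a player maps each position owned by that player having at least one move to one of its legal moves; it is winning if the player wins every run in which they follow it. *)

(* Defs.v *)
From Stdlib Require Import List.
Set Implicit Arguments.

Section Syntax.
Variables (Pr Vr : Type).

Inductive form : Type :=
| FP (p : Pr)
| FV (x : Vr)
| FBot
| FAnd (a b : form)
| FOr (a b : form)
| FImp (a b : form)
| FBox (a : form)
| FDia (a : form)
| FMu (x : Vr) (a : form)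
| FNu (x : Vr) (a : form).

Inductive posv (X : Vr) : form -> Prop :=
| pos_P p : posv X (FP p)
| pos_Bot : posv X FBot
| pos_Vo Y : Y <> X -> posv X (FV Y)
| pos_VX : posv X (FV X)
| pos_And a b : posv X a -> posv X b -> posv X (FAnd a b)
| pos_Or a b : posv X a -> posv X b -> posv X (FOr a b)
| pos_Imp a b : negv X a -> posv X b -> posv X (FImp a b)
| pos_Box a : posv X a -> posv X (FBox a)
| pos_Dia a : posv X a -> posv X (FDia a)
| pos_MuX a : posv X (FMu X a)
| pos_NuX a : posv X (FNu X a)
| pos_Muo Y a : Y <> X -> posv X a -> posv X (FMu Y a)
| pos_Nuo Y a : Y <> X -> posv X a -> posv X (FNu Y a)
with negv (X : Vr) : form -> Prop :=
| neg_P p : negv X (FP p)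
| neg_Bot : negv X FBot
| neg_Vo Y : Y <> X -> negv X (FV Y)
| neg_And a b : negv X a -> negv X b -> negv X (FAnd a b)
| neg_Or a b : negv X a -> negv X b -> negv X (FOr a b)
| neg_Imp a b : posv X a -> negv X b -> negv X (FImp a b)
| neg_Box a : negv X a -> negv X (FBox a)
| neg_Dia a : negv X a -> negv X (FDia a)
| neg_MuX a : negv X (FMu X a)
| neg_NuX a : negv X (FNu X a)
| neg_Muo Y a : Y <> X -> negv X a -> negv X (FMu Y a)
| neg_Nuo Y a : Y <> X -> negv X a -> negv X (FNu Y a).

Inductive Sub (c : form) : form -> Prop :=
| Sub_refl : Sub c c
| Sub_AndL a b : Sub c a -> Sub c (FAnd a b)
| Sub_AndR a b : Sub c b -> Sub c (FAnd a b)
| Sub_OrL a b : Sub c a -> Sub c (FOr a b)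
| Sub_OrR a b : Sub c b -> Sub c (FOr a b)
| Sub_ImpL a b : Sub c a -> Sub c (FImp a b)
| Sub_ImpR a b : Sub c b -> Sub c (FImp a b)
| Sub_Box a : Sub c a -> Sub c (FBox a)
| Sub_Dia a : Sub c a -> Sub c (FDia a)
| Sub_Mu x a : Sub c a -> Sub c (FMu x a)
| Sub_Nu x a : Sub c a -> Sub c (FNu x a).

Definition mu_formula (f : form) : Prop :=
  forall X a, (Sub (FMu X a) f -> posv X a) /\ (Sub (FNu X a) f -> posv X a).

Inductive freeIn (X : Vr) : form -> Prop :=
| free_V : freeIn X (FV X)
| free_AndL a b : freeIn X a -> freeIn X (FAnd a b)
| free_AndR a b : freeIn X b -> freeIn X (FAnd a b)
| free_OrL a b : freeIn X a -> freeIn X (FOr a b)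
| free_OrR a b : freeIn X b -> freeIn X (FOr a b)
| free_ImpL a b : freeIn X a -> freeIn X (FImp a b)
| free_ImpR a b : freeIn X b -> freeIn X (FImp a b)
| free_Box a : freeIn X a -> freeIn X (FBox a)
| free_Dia a : freeIn X a -> freeIn X (FDia a)
| free_Mu Y a : Y <> X -> freeIn X a -> freeIn X (FMu Y a)
| free_Nu Y a : Y <> X -> freeIn X a -> freeIn X (FNu Y a).

Definition sentence (f : form) : Prop := forall X, ~ freeIn X f.

Inductive unguardedOcc (X : Vr) : form -> Prop :=
| ug_V : unguardedOcc X (FV X)
| ug_AndL a b : unguardedOcc X a -> unguardedOcc X (FAnd a b)
| ug_AndR a b : unguardedOcc X b -> unguardedOcc X (FAnd a b)
| ug_OrL a b : unguardedOcc X a -> unguardedOcc X (FOr a b)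
| ug_OrR a b : unguardedOcc X b -> unguardedOcc X (FOr a b)
| ug_ImpL a b : unguardedOcc X a -> unguardedOcc X (FImp a b)
| ug_ImpR a b : unguardedOcc X b -> unguardedOcc X (FImp a b)
| ug_Mu Y a : unguardedOcc X a -> unguardedOcc X (FMu Y a)
| ug_Nu Y a : unguardedOcc X a -> unguardedOcc X (FNu Y a).

Definition guarded (f : form) : Prop :=
  forall X a, (Sub (FMu X a) f \/ Sub (FNu X a) f) -> ~ unguardedOcc X a.

Fixpoint binders (f : form) : list Vr :=
  match f with
  | FP _ | FV _ | FBot => nil
  | FAnd a b | FOr a b | FImp a b => binders a ++ binders b
  | FBox a | FDia a => binders a
  | FMu x a | FNu x a => x :: binders a
  end.

Definition well_bounded (f : form) : Prop := NoDup (binders f).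

Definition well_named (f : form) : Prop := guarded f /\ well_bounded f.

End Syntax.

Arguments FP {Pr Vr}.
Arguments FV {Pr Vr}.
Arguments FBot {Pr Vr}.
Arguments FAnd {Pr Vr}.
Arguments FOr {Pr Vr}.
Arguments FImp {Pr Vr}.
Arguments FBox {Pr Vr}.
Arguments FDia {Pr Vr}.
Arguments FMu {Pr Vr}.
Arguments FNu {Pr Vr}.

Record CKmodel (Pr : Type) := {
  W : Type;
  Wbot : W -> Prop;
  le : W -> W -> Prop;
  R : W -> W -> Prop;
  V : Pr -> W -> Prop;
  W_nonempty : inhabited W;
  le_refl : forall w, le w w;
  le_trans : forall u v w, le u v -> le v w -> le u w;
  V_mono : forall P w v, le w v -> V P w -> V P v;
  V_bot : forall P w, Wbot w -> V P w;
  Wbot_le : forall w v, le w v -> Wbot w -> Wbot v;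
  Wbot_R : forall w v, R w v -> Wbot w -> Wbot v
}.

Arguments W {Pr}.
Arguments Wbot {Pr}.
Arguments le {Pr}.
Arguments R {Pr}.
Arguments V {Pr}.

Section Semantics.
Variables (Pr Vr : Type) (M : CKmodel Pr).

Definition env := Vr -> W M -> Prop.

Definition upd (rho : env) (X : Vr) (A : W M -> Prop) : env :=
  fun Y w => (Y = X /\ A w) \/ (Y <> X /\ rho Y w).

(* least fixed point = intersection of prefixed points,
   greatest fixed point = union of postfixed points (Knaster-Tarski) *)
Fixpoint sem (rho : env) (f : form Pr Vr) {struct f} : W M -> Prop :=
  match f with
  | FP p => V M p
  | FV x => rho x
  | FBot => Wbot M
  | FAnd a b => fun w => sem rho a w /\ sem rho b w
  | FOr a b => fun w => sem rho a w \/ sem rho b w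
  | FImp a b => fun w => forall v, le M w v -> sem rho a v -> sem rho b v
  | FBox a => fun w => forall v u, le M w v -> R M v u -> sem rho a u
  | FDia a => fun w => forall v, le M w v -> exists u, R M v u /\ sem rho a u
  | FMu x a => fun w => forall A : W M -> Prop,
                 (forall v, sem (upd rho x A) a v -> A v) -> A w
  | FNu x a => fun w => exists A : W M -> Prop,
                 (forall v, A v -> sem (upd rho x A) a v) /\ A w
  end.

(* M, w |= f  (for sentences the variable valuation is irrelevant) *)
Definition sat (w : W M) (f : form Pr Vr) : Prop :=
  sem (fun _ _ => False) f w.

End Semantics.

Inductive role := Ver | Ref.
Definition dual (q : role) : role := match q with Ver => Ref | Ref => Ver end.
Inductive player := PI | PII.

Section Game.
Variables (Pr Vr : Type) (M : CKmodel Pr) (phi : form Pr Vr) (w0 : W M).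

(* formula part of a position: psi, hat-Diamond psi, or psi ? theta *)
Inductive node :=
| NF (a : form Pr Vr)
| NDia (a : form Pr Vr)
| NImp (a b : form Pr Vr).

(* position <v, node, Q>, Q the current role of player I *)
Inductive position := Pos (v : W M) (n : node) (q : role).

Definition pos_ok (p : position) : Prop :=
  match p with
  | Pos _ (NF a) _ => Sub a phi
  | Pos _ (NDia a) _ => Sub (FDia a) phi
  | Pos _ (NImp a b) _ => Sub (FImp a b) phi
  end.

Definition init : position := Pos w0 (NF phi) Ver.

Inductive move : position -> position -> Prop :=
| mv_OrL v a b q : move (Pos v (NF (FOr a b)) q) (Pos v (NF a) q)
| mv_OrR v a b q : move (Pos v (NF (FOr a b)) q) (Pos v (NF b) q)
| mv_QL v a b q : move (Pos v (NImp a b) q) (Pos v (NF a) (dual q))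
| mv_QR v a b q : move (Pos v (NImp a b) q) (Pos v (NF b) q)
| mv_HDia v u a q : R M v u -> move (Pos v (NDia a) q) (Pos u (NF a) q)
| mv_Mu v x a q : move (Pos v (NF (FMu x a)) q) (Pos v (NF a) q)
| mv_VMu v x a q : Sub (FMu x a) phi ->
    move (Pos v (NF (FV x)) q) (Pos v (NF (FMu x a)) q)
| mv_AndL v a b q : move (Pos v (NF (FAnd a b)) q) (Pos v (NF a) q)
| mv_AndR v a b q : move (Pos v (NF (FAnd a b)) q) (Pos v (NF b) q)
| mv_Imp v u a b q : le M v u -> move (Pos v (NF (FImp a b)) q) (Pos u (NImp a b) q)
| mv_Box v v' u a q : le M v v' -> R M v' u ->
    move (Pos v (NF (FBox a)) q) (Pos u (NF a) q)
| mv_Dia v u a q : le M v u -> move (Pos v (NF (FDia a)) q) (Pos u (NDia a) q)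
| mv_Nu v x a q : move (Pos v (NF (FNu x a)) q) (Pos v (NF a) q)
| mv_VNu v x a q : Sub (FNu x a) phi ->
    move (Pos v (NF (FV x)) q) (Pos v (NF (FNu x a)) q).

Definition verOwned (p : position) : Prop :=
  match p with
  | Pos v n _ =>
    match n with
    | NF (FP P) => ~ V M P v
    | NF FBot => ~ Wbot M v
    | NF (FOr _ _) => True
    | NImp _ _ => True
    | NDia _ => True
    | NF (FMu _ _) => True
    | NF (FV x) => ~ exists a, Sub (FNu x a) phi
    | _ => False
    end
  end.

Definition roleOf (p : position) : role := match p with Pos _ _ q => q end.

Definition ownsPos (p : position) (pl : player) : Prop :=
  match pl with
  | PI => (verOwned p /\ roleOf p = Ver) \/ (~ verOwned p /\ roleOf p = Ref)
  | PII => (verOwned p /\ roleOf p = Ref) \/ (~ verOwned p /\ roleOf p = Ver)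
  end.

Inductive reachable : position -> Prop :=
| reach_init : reachable init
| reach_step p p' : reachable p -> move p p' -> reachable p'.

Definition fixOwnedByI (c : form Pr Vr) : Prop :=
  exists v q, reachable (Pos v (NF c) q) /\
    ((q = Ver /\ exists x a, c = FNu x a) \/ (q = Ref /\ exists x a, c = FMu x a)).

Definition fixOwner (c : form Pr Vr) (pl : player) : Prop :=
  match pl with PI => fixOwnedByI c | PII => ~ fixOwnedByI c end.

Definition finite_run (f : nat -> position) (n : nat) : Prop :=
  f 0 = init /\ (forall i, i < n -> move (f i) (f (S i))) /\
  (forall p, ~ move (f n) p).

Definition infinite_run (f : nat -> position) : Prop :=
  f 0 = init /\ forall i, move (f i) (f (S i)).

Definition regen (f : nat -> position) (i : nat) (c : form Pr Vr) : Prop :=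
  exists v q x, f i = Pos v (NF (FV x)) q /\ f (S i) = Pos v (NF c) q /\
    ((exists a, c = FMu x a) \/ (exists a, c = FNu x a)).

Definition infRegen (f : nat -> position) (c : form Pr Vr) : Prop :=
  forall n, exists i, n <= i /\ regen f i c.

Definition outermostRegen (f : nat -> position) (c : form Pr Vr) : Prop :=
  infRegen f c /\ forall c', infRegen f c' -> Sub c' c.

Definition wins_finite (pl : player) (f : nat -> position) (n : nat) : Prop :=
  ~ ownsPos (f n) pl.

Definition wins_infinite (pl : player) (f : nat -> position) : Prop :=
  exists c, outermostRegen f c /\ fixOwner c pl.

Definition strategy_for (pl : player) (sigma : position -> position) : Prop :=
  forall p, pos_ok p -> ownsPos p pl -> (exists p', move p p') -> move p (sigma p).

Definition winning_strategy (pl : player) (sigma : position -> position) : Prop :=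
  strategy_for pl sigma /\
  (forall f n, finite_run f n ->
     (forall i, i < n -> ownsPos (f i) pl -> f (S i) = sigma (f i)) ->
     wins_finite pl f n) /\
  (forall f, infinite_run f ->
     (forall i, ownsPos (f i) pl -> f (S i) = sigma (f i)) ->
     wins_infinite pl f).

Definition has_winning_strategy (pl : player) : Prop :=
  exists sigma, winning_strategy pl sigma.

End Game.

(* Main.v *)
Require Import Defs.
From Stdlib Require Import List Classical ClassicalEpsilon FunctionalExtensionality PropExtensionality Lia Arith.
Import ListNotations.
Set Implicit Arguments.

Lemma set_ext (X : Type) (A B : X -> Prop) : (forall x, A x <-> B x) -> A = B.
Proof.
  intro H; apply functional_extensionality; intro x; apply propositional_extensionality; auto.
Qed.

Definition incl_s (X : Type) (A B : X -> Prop) := forall x, A x -> B x.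

Section Tower.
Variable X : Type.
Variable F : (X -> Prop) -> (X -> Prop).
Hypothesis Fmono : forall A B, incl_s A B -> incl_s (F A) (F B).

Inductive tower : (X -> Prop) -> Prop :=
| tw_step A : tower A -> tower (F A)
| tw_union (S : (X -> Prop) -> Prop) :
    (forall A, S A -> tower A) -> tower (fun x => exists A, S A /\ A x).

Lemma tower_below (P : X -> Prop) : incl_s (F P) P -> forall A, tower A -> incl_s A P.
Proof.
  intros HP A HA; induction HA as [A HA IH | S HS IH].
  - intros x Hx. apply HP. exact (Fmono IH Hx).
  - intros x [A [HA Hx]]. exact (IH A HA x Hx).
Qed.

Lemma tower_infl A : tower A -> incl_s A (F A).
Proof.
  intro HA; induction HA as [A HA IH | S HS IH].
  - apply Fmono; exact IH.
  - intros x [A [HA Hx]]. apply (Fmono (A := A)).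
    + intros y Hy; exists A; auto.
    + apply IH; auto.
Qed.

Definition extreme A := forall B, tower B -> incl_s B A -> B = A \/ incl_s (F B) A.

Lemma step1 A : tower A -> extreme A -> forall B, tower B -> incl_s B A \/ incl_s (F A) B.
Proof.
  intros HA Hex B HB; induction HB as [B HB IH | S HS IH].
  - destruct IH as [H|H].
    + destruct (Hex B HB H) as [E|E].
      * subst; right; intros x Hx; exact Hx.
      * left; exact E.
    + right. intros x Hx. apply tower_infl; auto.
  - destruct (classic (forall C, S C -> incl_s C A)) as [H|H].
    + left; intros x [C [HC Hx]]; exact (H C HC x Hx).
    + right. apply not_all_ex_not in H as [C H].
      apply imply_to_and in H as [HC H].
      destruct (IH C HC) as [H'|H']; [contradiction|].
      intros x Hx; exists C; split; auto.
Qed.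

Lemma incl_antisym (A B : X -> Prop) : incl_s A B -> incl_s B A -> A = B.
Proof. intros; apply set_ext; split; auto. Qed.

Lemma all_extreme A : tower A -> extreme A.
Proof.
  intro HA; induction HA as [A HA IH | S HS IH].
  - intros B HB HBA.
    destruct (step1 HA IH HB) as [H|H].
    + destruct (IH B HB H) as [E|E].
      * subst; right; intros x Hx; exact Hx.
      * right. intros x Hx. apply tower_infl; auto.
    + left; apply incl_antisym; auto.
  - intros B HB HBU.
    destruct (classic (exists C, S C /\ incl_s B C /\ B <> C)) as [[C [HC [H1 H2]]]|H].
    + destruct (IH C HC B HB H1) as [E|E]; [contradiction|].
      right; intros x Hx; exists C; auto.
    + left. apply incl_antisym; auto.
      intros x [C [HC Hx]].
      destruct (step1 (HS C HC) (IH C HC) HB) as [H1|H1].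
      * assert (B = C) as E.
        { apply NNPP; intro H2; apply H; exists C; auto. }
        subst; auto.
      * apply H1. apply tower_infl; auto.
Qed.

Lemma tower_total A B : tower A -> tower B -> incl_s A B \/ incl_s B A.
Proof.
  intros HA HB.
  destruct (step1 HA (all_extreme HA) HB) as [H|H]; auto.
  left; intros x Hx; apply H; apply tower_infl; auto.
Qed.

Lemma tower_least (S : (X -> Prop) -> Prop) :
  (forall A, S A -> tower A) -> (exists A, S A) ->
  exists m, S m /\ forall A, S A -> incl_s m A.
Proof.
  intros HS [A0 HA0].
  set (U := fun x => exists T, (tower T /\ forall s, S s -> incl_s T s) /\ T x).
  assert (HU : tower U) by (apply tw_union; intros T [HT _]; auto).
  assert (HUs : forall s, S s -> incl_s U s).
  { intros s Hs x [T [[_ HT] Hx]]; exact (HT s Hs x Hx). }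
  destruct (classic (exists s, S s /\ incl_s s U)) as [[s [Hs Hs']]|H].
  - exists s; split; auto. intros A HA x Hx; apply (HUs A HA); auto.
  - exfalso.
    assert (HF : forall s, S s -> incl_s (F U) s).
    { intros s Hs. destruct (all_extreme (HS s Hs) HU (HUs s Hs)) as [E|E]; auto.
      exfalso; apply H; exists s; split; auto; rewrite <- E; intros x Hx; auto. }
    assert (HFU : incl_s (F U) U).
    { intros x Hx; exists (F U); split; auto. split; auto. apply tw_step; auto. }
    apply H; exists A0; split; auto.
    apply tower_below; auto.
Qed.

Lemma tower_pred T v : tower T -> T v ->
  exists U, tower U /\ incl_s U T /\ ~ U v /\ F U v.
Proof.
  intros HT Hv.
  set (U := fun x => exists A, (tower A /\ ~ A v) /\ A x).
  assert (HU : tower U) by (apply tw_union; intros A [HA _]; auto).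
  assert (HnU : ~ U v) by (intros [A [[_ HA] Hx]]; auto).
  exists U; repeat split; auto.
  - intros x [A [[HA HAv] Hx]].
    destruct (tower_total HA HT) as [H|H]; auto.
    exfalso; apply HAv, H, Hv.
  - apply NNPP; intro HFv.
    assert (HFU : incl_s (F U) U).
    { intros x Hx; exists (F U); split; auto. split; auto. apply tw_step; auto. }
    apply HnU. exact (tower_below HFU HT v Hv).
Qed.

Definition inLfp v := forall P, incl_s (F P) P -> P v.

Lemma tower_top v : inLfp v -> exists U, tower U /\ F U v.
Proof.
  intros Hv.
  set (U := fun x => exists A, tower A /\ A x).
  assert (HU : tower U) by (apply tw_union; auto).
  exists U; split; auto.
  assert (HFU : incl_s (F U) U) by (intros x Hx; exists (F U); split; auto; apply tw_step; auto).
  apply tower_infl; auto. apply Hv; auto.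
Qed.

Lemma tower_empty : tower (fun _ => False).
Proof.
  replace (fun _ : X => False) with (fun x => exists A : X -> Prop, False /\ A x).
  - apply tw_union; intros A [].
  - apply set_ext; intros x; split; [intros [A [[] _]] | intros []].
Qed.

End Tower.
Section Syn.
Variables Pr Vr : Type.
Local Notation form := (form Pr Vr).

Fixpoint size (f : form) : nat :=
  match f with
  | FP _ | FV _ | FBot => 1
  | FAnd a b | FOr a b | FImp a b => S (size a + size b)
  | FBox a | FDia a | FMu _ a | FNu _ a => S (size a)
  end.

Lemma Sub_size (c f : form) : Sub c f -> size c <= size f.
Proof. induction 1; simpl; lia. Qed.

Lemma Sub_trans (a b c : form) : Sub a b -> Sub b c -> Sub a c.
Proof. intros H1 H2; induction H2; [exact H1| ..];
  solve [constructor; auto | apply Sub_AndR; auto | apply Sub_OrR; auto | apply Sub_ImpR; auto]. Qed.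

Lemma Sub_eq_size (a b : form) : Sub a b -> size b <= size a -> a = b.
Proof. induction 1; simpl; intros; auto; pose proof (Sub_size H); simpl in *; lia. Qed.

Lemma Sub_antisym (a b : form) : Sub a b -> Sub b a -> a = b.
Proof. intros H1 H2; apply Sub_eq_size; auto; apply Sub_size; auto. Qed.

Definition isBinder (x : Vr) (c : form) := (exists a, c = FMu x a) \/ (exists a, c = FNu x a).

Lemma binder_in x c f : isBinder x c -> Sub c f -> In x (binders f).
Proof.
  intros Hb H; induction H; simpl; try (apply in_or_app; auto); auto.
  destruct Hb as [[a E]|[a E]]; subst; simpl; auto.
Qed.

Lemma NoDup_app_both (l1 l2 : list Vr) x : NoDup (l1 ++ l2) -> In x l1 -> In x l2 -> False.
Proof.
  induction l1; simpl; intros H H1 H2; auto.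
  inversion H as [|? ? Hn Hnd]; subst. destruct H1; subst; eauto.
  apply Hn; apply in_or_app; auto.
Qed.

Lemma NoDup_app_l (l1 l2 : list Vr) : NoDup (l1 ++ l2) -> NoDup l1.
Proof.
  induction l1; simpl; intros H; constructor; inversion H as [|? ? Hn Hnd]; subst; auto.
  intro; apply Hn; apply in_or_app; auto.
Qed.

Lemma NoDup_app_r (l1 l2 : list Vr) : NoDup (l1 ++ l2) -> NoDup l2.
Proof. induction l1; simpl; intros H; auto; inversion H; auto. Qed.

Lemma Sub_inv (c f : form) : Sub c f -> c = f \/
  match f with
  | FAnd a b | FOr a b | FImp a b => Sub c a \/ Sub c b
  | FBox a | FDia a | FMu _ a | FNu _ a => Sub c a
  | _ => False end.
Proof. inversion 1; subst; auto. Qed.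

Lemma bind_unique x c c' f : NoDup (binders f) -> isBinder x c -> isBinder x c' ->
  Sub c f -> Sub c' f -> c = c'.
Proof.
  intros Hnd Hb Hb'. revert Hnd. induction f; intros Hnd H H'; simpl in Hnd;
  apply Sub_inv in H; apply Sub_inv in H'.
  1-3: destruct H as [H|[]]; subst; destruct Hb as [[? E]|[? E]]; discriminate.
  1-3: (destruct H as [H|H]; [subst; destruct Hb as [[? E]|[? E]]; discriminate|]);
       (destruct H' as [H'|H']; [subst; destruct Hb' as [[? E]|[? E]]; discriminate|]);
       destruct H as [H|H]; destruct H' as [H'|H'];
    [ apply IHf1; eauto using NoDup_app_l
    | exfalso; eapply NoDup_app_both; eauto using binder_in
    | exfalso; eapply NoDup_app_both; eauto using binder_in
    | apply IHf2; eauto using NoDup_app_r ].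
  1-2: (destruct H as [H|H]; [subst; destruct Hb as [[? E]|[? E]]; discriminate|]);
       (destruct H' as [H'|H']; [subst; destruct Hb' as [[? E]|[? E]]; discriminate|]);
       apply IHf; auto.
  1-2: inversion Hnd as [|? ? Hn Hnd']; subst;
       destruct H as [H|H]; destruct H' as [H'|H']; subst; auto;
       [ exfalso; destruct Hb as [[? E]|[? E]]; inversion E; subst;
         apply Hn; eapply binder_in; eauto
       | exfalso; destruct Hb' as [[? E]|[? E]]; inversion E; subst;
         apply Hn; eapply binder_in; eauto ].
Qed.

Inductive occ : form -> role -> form -> role -> Prop :=
| occ_refl f r : occ f r f r
| occ_AndL a b r c q : occ a r c q -> occ (FAnd a b) r c q
| occ_AndR a b r c q : occ b r c q -> occ (FAnd a b) r c q
| occ_OrL a b r c q : occ a r c q -> occ (FOr a b) r c q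
| occ_OrR a b r c q : occ b r c q -> occ (FOr a b) r c q
| occ_ImpL a b r c q : occ a (dual r) c q -> occ (FImp a b) r c q
| occ_ImpR a b r c q : occ b r c q -> occ (FImp a b) r c q
| occ_Box a r c q : occ a r c q -> occ (FBox a) r c q
| occ_Dia a r c q : occ a r c q -> occ (FDia a) r c q
| occ_Mu x a r c q : occ a r c q -> occ (FMu x a) r c q
| occ_Nu x a r c q : occ a r c q -> occ (FNu x a) r c q.

Lemma occ_Sub f r c q : occ f r c q -> Sub c f.
Proof. induction 1; solve [constructor; auto | apply Sub_AndR; auto | apply Sub_OrR; auto | apply Sub_ImpR; auto]. Qed.

Lemma occ_trans f r c q d q' : occ f r c q -> occ c q d q' -> occ f r d q'.
Proof. induction 1; intros; auto; solve [constructor; auto | apply occ_AndR; auto | apply occ_OrR; auto | apply occ_ImpR; auto]. Qed.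

Lemma dual_dual q : dual (dual q) = q.
Proof. destruct q; reflexivity. Qed.

Lemma occ_unique x c f r q1 q2 : NoDup (binders f) -> isBinder x c ->
  occ f r c q1 -> occ f r c q2 -> q1 = q2.
Proof.
  intros Hnd Hb H1; revert q2 Hnd; induction H1; intros q2 Hnd H2; simpl in Hnd.
  1: { inversion H2; subst; auto; exfalso;
    match goal with H : occ _ _ _ _ |- _ => apply occ_Sub, Sub_size in H end; simpl in *; lia. }
  all: inversion H2; subst;
    try (exfalso; apply occ_Sub, Sub_size in H1; simpl in *; lia).
  all: try (eapply IHocc; eauto using NoDup_app_l, NoDup_app_r; inversion Hnd; auto; fail).
  all: exfalso; eapply NoDup_app_both; eauto using binder_in, occ_Sub.
Qed.

Lemma Sub_occ c f : Sub c f -> forall r, exists q, occ f r c q.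
Proof.
  induction 1; intros r;
  try (destruct (IHSub r) as [q Hq]; exists q; constructor; auto; fail).
  - exists r; constructor.
  - destruct (IHSub (dual r)) as [q Hq]; exists q; constructor; auto.
Qed.

Definition encl (x : Vr) (c f : form) := exists c' a, (c' = FMu x a \/ c' = FNu x a) /\ Sub c' f /\ Sub c a.

Lemma free_encl x c f : Sub c f -> freeIn x c -> freeIn x f \/ encl x c f.
Proof.
  induction 1; intros Hf; auto;
  try (destruct (IHSub Hf) as [H1|[c' [a' [E [H2 H3]]]]];
       [left; constructor; auto | right; exists c', a'; repeat split; auto; constructor; auto]; fail).
  - destruct (IHSub Hf) as [H1|[c' [a' [E [H2 H3]]]]].
    + destruct (classic (x0 = x)) as [->|Hne].
      * right; exists (FMu x a), a; repeat split; auto; constructor.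
      * left; constructor; auto.
    + right; exists c', a'; repeat split; auto; constructor; auto.
  - destruct (IHSub Hf) as [H1|[c' [a' [E [H2 H3]]]]].
    + destruct (classic (x0 = x)) as [->|Hne].
      * right; exists (FNu x a), a; repeat split; auto; constructor.
      * left; constructor; auto.
    + right; exists c', a'; repeat split; auto; constructor; auto.
Qed.

Lemma var_occ x c : Sub (FV x) c -> freeIn x c \/ exists c', isBinder x c' /\ Sub c' c.
Proof.
  intros H; destruct (free_encl H (@free_V Pr Vr x)) as [H1|[c' [a [E [H2 H3]]]]]; auto.
  right; exists c'; split; auto. destruct E; subst; [left|right]; eauto.
Qed.

Lemma In_binders_Sub x f : In x (binders f) -> exists c, isBinder x c /\ Sub c f.
Proof.
  induction f; simpl; intros H; try contradiction;
  try (apply in_app_or in H; destruct H as [H|H];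
       [destruct (IHf1 H) as [c [Hc Hs]] | destruct (IHf2 H) as [c [Hc Hs]]];
       exists c; split; auto; constructor; auto; fail);
  try (destruct (IHf H) as [c [Hc Hs]]; exists c; split; auto; constructor; auto; fail).
  - destruct H as [->|H].
    + exists (FMu x f); split; [left; eauto | constructor].
    + destruct (IHf H) as [c [Hc Hs]]; exists c; split; auto; constructor; auto.
  - destruct H as [->|H].
    + exists (FNu x f); split; [right; eauto | constructor].
    + destruct (IHf H) as [c [Hc Hs]]; exists c; split; auto; constructor; auto.
Qed.

Lemma before_lemma (y : Vr) (a : form) (z : Vr) (c' f : form) : (c' = FMu y a \/ c' = FNu y a) -> Sub c' f ->
  In z (binders a) -> exists l1 l2, binders f = l1 ++ z :: l2 /\ In y l1.
Proof.
  intros E H Hz; induction H; simpl.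
  1: { destruct (in_split _ _ Hz) as [m1 [m2 Hm]].
    destruct E; subst; simpl; rewrite Hm; exists (y :: m1), m2; split; simpl; auto. }
  all: try (destruct IHSub as [l1 [l2 [Hl Hy]]]; auto).
  all: try (rewrite Hl; exists l1, (l2 ++ binders b); rewrite <- app_assoc; split; auto; fail).
  all: try (rewrite Hl; exists (binders a0 ++ l1), l2; rewrite app_assoc; split; auto;
            apply in_or_app; auto; fail).
  all: try (exists l1, l2; split; auto; fail).
  all: try (rewrite Hl; exists (x :: l1), l2; split; simpl; auto; fail).
Qed.

Lemma split_unique (l1 l2 m1 m2 : list Vr) z : NoDup (l1 ++ z :: l2) ->
  l1 ++ z :: l2 = m1 ++ z :: m2 -> l1 = m1 /\ l2 = m2.
Proof.
  revert m1; induction l1; intros m1 Hnd E; destruct m1; simpl in *; inversion E; subst.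
  - auto.
  - exfalso; inversion Hnd; subst; apply H1; apply in_or_app; right; simpl; auto.
  - exfalso; inversion Hnd; subst; apply H1; apply in_or_app; right; simpl; auto.
  - inversion Hnd; subst. destruct (IHl1 m1 H3 H1); subst; auto.
Qed.

End Syn.
Section Syn2.
Variables Pr Vr : Type.
Local Notation form := (form Pr Vr).
Variable phi : form.
Hypothesis Hmu : mu_formula phi.

Ltac subchild Hs := eapply Sub_trans; [|exact Hs];
  first [ apply Sub_AndL; apply Sub_refl | apply Sub_AndR; apply Sub_refl
        | apply Sub_OrL; apply Sub_refl | apply Sub_OrR; apply Sub_refl
        | apply Sub_ImpL; apply Sub_refl | apply Sub_ImpR; apply Sub_refl
        | apply Sub_Box; apply Sub_refl | apply Sub_Dia; apply Sub_refl
        | apply Sub_Mu; apply Sub_refl | apply Sub_Nu; apply Sub_refl ].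

Lemma var_role : forall f, Sub f phi -> forall r q x, occ f r (FV x) q ->
  (freeIn x f /\ (posv x f -> q = r) /\ (negv x f -> q = dual r)) \/
  (exists c, isBinder x c /\ occ f r c q).
Proof.
  induction f; intros Hs r q y Ho; inversion Ho; subst.
  1: { left; split; [constructor|split]; auto. intros Hn; inversion Hn; congruence. }
  all: match goal with
       | H : occ ?a _ (FV _) _, IH : Sub ?a phi -> _ |- _ =>
           destruct (IH ltac:(subchild Hs) _ _ _ H) as [[H1 [H2 H3]]|[c [Hc Hc']]]
       end.
  all: try (right; exists c; split; auto;
            solve [constructor; auto | apply occ_AndR; auto | apply occ_OrR; auto
                  | apply occ_ImpR; auto]; fail).
  1-4: left; split; [solve [constructor; auto | apply free_AndR; auto | apply free_OrR; auto]|split];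
       intros Hp; inversion Hp; auto.
  1: { left; split; [constructor; auto|split]; intros Hp; inversion Hp; subst; auto.
    rewrite H3; auto; apply dual_dual. }
  1: { left; split; [apply free_ImpR; auto|split]; intros Hp; inversion Hp; auto. }
  1-2: left; split; [constructor; auto|split]; intros Hp; inversion Hp; auto.
  1: { destruct (classic (x = y)) as [->|Hne].
    + right; exists (FMu y f); split; [left; eauto|].
      rewrite H2; [constructor|]. apply (proj1 (Hmu y f) Hs).
    + left; split; [constructor; auto|split]; intros Hp; inversion Hp; subst; auto;
      congruence. }
  1: { destruct (classic (x = y)) as [->|Hne].
    + right; exists (FNu y f); split; [right; eauto|].
      rewrite H2; [constructor|]. apply (proj2 (Hmu y f) Hs).
    + left; split; [constructor; auto|split]; intros Hp; inversion Hp; subst; auto;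
      congruence. }
Qed.

End Syn2.
Section Sem.
Variables (Pr Vr : Type) (M : CKmodel Pr).
Local Notation form := (form Pr Vr).
Local Notation env := (env Vr M).

Lemma upd_iff (rho : env) X A Y w : upd rho X A Y w <-> (Y = X /\ A w) \/ (Y <> X /\ rho Y w).
Proof. reflexivity. Qed.

Lemma upd_eq (rho : env) X A w : upd rho X A X w <-> A w.
Proof. unfold upd; split; [intros [[_ H]|[H _]]; auto; congruence | auto]. Qed.

Lemma upd_neq (rho : env) X A Y w : Y <> X -> (upd rho X A Y w <-> rho Y w).
Proof. unfold upd; intros Hne; split; [intros [[E _]|[_ H]]; auto; congruence | auto]. Qed.

Lemma sem_ext (a : form) : forall (rho rho' : env),
  (forall x, freeIn x a -> forall w, rho x w <-> rho' x w) ->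
  forall w, sem rho a w <-> sem rho' a w.
Proof.
  induction a; intros rho rho' H w; simpl.
  - reflexivity.
  - apply H; constructor.
  - reflexivity.
  - rewrite (IHa1 rho rho'), (IHa2 rho rho'); [reflexivity| |]; intros; apply H;
      solve [constructor; auto | apply free_AndR; auto].
  - rewrite (IHa1 rho rho'), (IHa2 rho rho'); [reflexivity| |]; intros; apply H;
      solve [constructor; auto | apply free_OrR; auto].
  - assert (E1 : forall v, sem rho a1 v <-> sem rho' a1 v)
      by (apply IHa1; intros; apply H; constructor; auto).
    assert (E2 : forall v, sem rho a2 v <-> sem rho' a2 v)
      by (apply IHa2; intros; apply H; apply free_ImpR; auto).
    split; intros Hi v Hv Ha; apply E2; apply Hi; auto; apply E1; auto.
  - assert (E1 : forall v, sem rho a v <-> sem rho' a v)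
      by (apply IHa; intros; apply H; constructor; auto).
    split; intros Hi v u H1 H2; [rewrite <- E1|rewrite E1]; eauto.
  - assert (E1 : forall v, sem rho a v <-> sem rho' a v)
      by (apply IHa; intros; apply H; constructor; auto).
    split; intros Hi v H1; destruct (Hi v H1) as [u [Hu1 Hu2]]; exists u;
      [rewrite <- E1|rewrite E1]; auto.
  - assert (E : forall A v, sem (upd rho x A) a v <-> sem (upd rho' x A) a v).
    { intros A; apply IHa. intros y Hy u. unfold upd.
      destruct (classic (y = x)) as [->|Hne]; [tauto|].
      rewrite (H y); [tauto|]. constructor; auto. }
    split; intros Hi A HA; apply Hi; intros v Hv; apply HA; [rewrite <- E|rewrite E]; auto.
  - assert (E : forall A v, sem (upd rho x A) a v <-> sem (upd rho' x A) a v).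
    { intros A; apply IHa. intros y Hy u. unfold upd.
      destruct (classic (y = x)) as [->|Hne]; [tauto|].
      rewrite (H y); [tauto|]. constructor; auto. }
    split; intros [A [HA Hw]]; exists A; split; auto; intros v Hv;
      [rewrite <- E|rewrite E]; auto.
Qed.

Lemma bind_indep (rho1 rho2 : env) y a :
  (forall z, z <> y -> forall w, rho1 z w <-> rho2 z w) ->
  (forall w, sem rho1 (FMu y a) w -> sem rho2 (FMu y a) w) /\
  (forall w, sem rho1 (FNu y a) w -> sem rho2 (FNu y a) w).
Proof.
  intros H; split; intros w Hw;
  [refine (proj1 (sem_ext (a:=FMu y a) rho1 rho2 _ w) Hw) | refine (proj1 (sem_ext (a:=FNu y a) rho1 rho2 _ w) Hw)];
  intros z Hz u; inversion Hz; subst; apply H; congruence.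
Qed.

Lemma sem_mono (x : Vr) (a : form) : forall (rho1 rho2 : env),
  (forall y, y <> x -> forall w, rho1 y w <-> rho2 y w) ->
  incl_s (rho1 x) (rho2 x) ->
  (posv x a -> incl_s (sem rho1 a) (sem rho2 a)) /\
  (negv x a -> incl_s (sem rho2 a) (sem rho1 a)).
Proof.
  induction a; intros rho1 rho2 Hag Hinc; simpl; split; intros Hp w Hw;
    inversion Hp; subst; auto.
  - apply Hag; auto.
  - apply Hag; auto.
  - split; [apply (IHa1 rho1 rho2)|apply (IHa2 rho1 rho2)]; auto; apply Hw.
  - split; [apply (IHa1 rho1 rho2)|apply (IHa2 rho1 rho2)]; auto; apply Hw.
  - destruct Hw; [left; apply (IHa1 rho1 rho2)|right; apply (IHa2 rho1 rho2)]; auto.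
  - destruct Hw; [left; apply (IHa1 rho1 rho2)|right; apply (IHa2 rho1 rho2)]; auto.
  - intros v Hv Hh. apply (proj1 (IHa2 rho1 rho2 Hag Hinc)); auto.
    apply Hw; auto. apply (proj2 (IHa1 rho1 rho2 Hag Hinc)); auto.
  - intros v Hv Hh. apply (proj2 (IHa2 rho1 rho2 Hag Hinc)); auto.
    apply Hw; auto. apply (proj1 (IHa1 rho1 rho2 Hag Hinc)); auto.
  - intros v u Hh1 Hh2; apply (proj1 (IHa rho1 rho2 Hag Hinc)); eauto.
  - intros v u Hh1 Hh2; apply (proj2 (IHa rho1 rho2 Hag Hinc)); eauto.
  - intros v Hh; destruct (Hw v Hh) as [u [Hu1 Hu2]]; exists u; split; auto;
      apply (proj1 (IHa rho1 rho2 Hag Hinc)); auto.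
  - intros v Hh; destruct (Hw v Hh) as [u [Hu1 Hu2]]; exists u; split; auto;
      apply (proj2 (IHa rho1 rho2 Hag Hinc)); auto.
  - exact (proj1 (bind_indep _ _ a Hag) w Hw).
  - intros A HA; apply Hw; intros v Hv; apply HA.
    apply (proj1 (IHa (upd rho1 x0 A) (upd rho2 x0 A) ltac:(intros y Hy u; unfold upd; destruct (classic (y = x0)); [tauto|rewrite (Hag y Hy); tauto]) ltac:(intros u; rewrite !upd_neq; auto))); auto.
  - exact (proj1 (bind_indep _ _ a (fun z Hz u => iff_sym (Hag z Hz u))) w Hw).
  - intros A HA; apply Hw; intros v Hv; apply HA.
    apply (proj2 (IHa (upd rho1 x0 A) (upd rho2 x0 A) ltac:(intros y Hy u; unfold upd; destruct (classic (y = x0)); [tauto|rewrite (Hag y Hy); tauto]) ltac:(intros u; rewrite !upd_neq; auto))); auto.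
  - exact (proj2 (bind_indep _ _ a Hag) w Hw).
  - destruct Hw as [A [HA Hw]]; exists A; split; auto; intros v Hv.
    apply (proj1 (IHa (upd rho1 x0 A) (upd rho2 x0 A) ltac:(intros y Hy u; unfold upd; destruct (classic (y = x0)); [tauto|rewrite (Hag y Hy); tauto]) ltac:(intros u; rewrite !upd_neq; auto))); auto.
  - exact (proj2 (bind_indep _ _ a (fun z Hz u => iff_sym (Hag z Hz u))) w Hw).
  - destruct Hw as [A [HA Hw]]; exists A; split; auto; intros v Hv.
    apply (proj2 (IHa (upd rho1 x0 A) (upd rho2 x0 A) ltac:(intros y Hy u; unfold upd; destruct (classic (y = x0)); [tauto|rewrite (Hag y Hy); tauto]) ltac:(intros u; rewrite !upd_neq; auto))); auto.
Qed.

Definition Fop (rho : env) (x : Vr) (a : form) : (W M -> Prop) -> (W M -> Prop) :=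
  fun A => sem (upd rho x A) a.

Lemma Fop_mono rho x a : posv x a -> forall A B, incl_s A B -> incl_s (Fop rho x a A) (Fop rho x a B).
Proof.
  intros Hp A B H. unfold Fop. refine (proj1 (sem_mono (x:=x) a (upd rho x A) (upd rho x B) _ _) Hp).
  - intros y Hy u; rewrite !upd_neq; tauto.
  - intros u; rewrite !upd_eq; auto.
Qed.

Lemma lfp_unfold rho x a : posv x a -> forall w,
  sem rho (FMu x a) w <-> Fop rho x a (sem rho (FMu x a)) w.
Proof.
  intros Hp.
  assert (H1 : incl_s (Fop rho x a (sem rho (FMu x a))) (sem rho (FMu x a))).
  { intros w Hw P HP. apply HP. revert w Hw. apply Fop_mono; auto.
    intros v Hv; apply Hv; auto. }
  intros w; split; auto.
  intros Hw; apply Hw. intros v Hv. apply (Fop_mono rho Hp H1); auto.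
Qed.

Lemma gfp_unfold rho x a : posv x a -> forall w,
  sem rho (FNu x a) w <-> Fop rho x a (sem rho (FNu x a)) w.
Proof.
  intros Hp.
  assert (H1 : incl_s (sem rho (FNu x a)) (Fop rho x a (sem rho (FNu x a)))).
  { intros w [A [HA Hw]].
    refine (Fop_mono rho Hp (A:=A) (B:=sem rho (FNu x a)) _ w (HA w Hw)).
    intros v Hv; exists A; auto. }
  intros w; split; auto.
  intros Hw; exists (Fop rho x a (sem rho (FNu x a))); split; auto.
  intros v Hv; apply (Fop_mono rho Hp H1); auto.
Qed.

Lemma sem_upd_same (rho : env) x a w : sem (upd rho x (rho x)) a w <-> sem rho a w.
Proof.
  apply sem_ext; intros y _ u; unfold upd; destruct (classic (y = x)) as [->|]; tauto.
Qed.

End Sem.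
Section Main.
Variables (Pr Vr : Type) (M : CKmodel Pr) (phi : form Pr Vr).
Hypothesis Hmu : mu_formula phi.
Hypothesis Hnd : NoDup (binders phi).
Hypothesis Hsent : sentence phi.
Local Notation form := (form Pr Vr).
Local Notation env := (env Vr M).
Local Notation L := (binders phi).
Local Notation set := (W M -> Prop).

Definition roleP (pl : player) (q : role) := match pl with PI => q | PII => dual q end.
Lemma roleP_dual pl q : roleP pl (dual q) = dual (roleP pl q).
Proof. destruct pl; reflexivity. Qed.

Definition isMu (c : form) := match c with FMu _ _ => True | _ => False end.
Definition isNu (c : form) := match c with FNu _ _ => True | _ => False end.

Definition key (rho : env) (c : form) : set :=
  match c with FMu x _ => rho x | FNu x _ => fun w => ~ rho x w | _ => fun _ => False end.
Definition Op (rho : env) (c : form) : set -> set :=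
  match c with
  | FMu x a => Fop rho x a
  | FNu x a => fun T w => ~ Fop rho x a (fun u => ~ T u) w
  | _ => fun T => T end.
Definition valOf (c : form) (T : set) : set :=
  match c with FNu _ _ => fun w => ~ T w | _ => T end.

Lemma binder_posv x c : isBinder x c -> Sub c phi ->
  exists a, (c = FMu x a \/ c = FNu x a) /\ posv x a.
Proof.
  intros [[a E]|[a E]] Hs; subst; exists a; split; auto.
  - apply (proj1 (Hmu x a)); auto.
  - apply (proj2 (Hmu x a)); auto.
Qed.

Lemma Op_mono rho x c : isBinder x c -> Sub c phi ->
  forall A B, incl_s A B -> incl_s (Op rho c A) (Op rho c B).
Proof.
  intros Hb Hs. destruct (binder_posv Hb Hs) as [a [[E|E] Hp]]; subst; simpl.
  - apply Fop_mono; auto.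
  - intros A B H w Hw Hf; apply Hw.
    exact (Fop_mono rho Hp (A:=fun u => ~ B u) (B:=fun u => ~ A u) (fun u Hu Hu' => Hu (H u Hu')) w Hf).
Qed.

Lemma binder_var (x y : Vr) (c : form) : isBinder x c -> isBinder y c -> x = y.
Proof. intros [[a E]|[a E]] [[b E']|[b E']]; subst; inversion E'; auto. Qed.

Lemma free_before y c z l r : isBinder y c -> Sub c phi -> freeIn z c ->
  L = l ++ y :: r -> In z l.
Proof.
  intros Hb Hs Hf HL.
  destruct (free_encl Hs Hf) as [H|[c' [a' [E [H1 H2]]]]].
  - exfalso; apply (Hsent H).
  - assert (Hy : In y (binders a')) by (eapply binder_in; eauto).
    destruct (before_lemma y E H1 Hy) as [l1 [l2 [HL' Hz]]].
    pose proof Hnd as Hnd'. rewrite HL in Hnd', HL'.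
    destruct (split_unique _ _ _ _ _ Hnd' HL'); subst; auto.
Qed.

Lemma In_L_binder x : In x L -> exists c, isBinder x c /\ Sub c phi.
Proof. apply In_binders_Sub. Qed.

Section Player.
Variable pl : player.

Definition progressB (c : form) := exists q, occ phi Ver c q /\
  ((isMu c /\ roleP pl q = Ver) \/ (isNu c /\ roleP pl q = Ref)).

Definition condB (rho : env) (c : form) :=
  (progressB c -> tower (Op rho c) (key rho c)) /\
  (~ progressB c -> forall x, isBinder x c -> forall w, rho x w <-> sem rho c w).

Definition cons (rho : env) :=
  (forall x c, isBinder x c -> Sub c phi -> condB rho c) /\
  (forall x, ~ In x L -> forall w, ~ rho x w).

Definition progV x := exists c, isBinder x c /\ Sub c phi /\ progressB c.
Definition eqV x (a b : env) := progV x -> forall w, a x w <-> b x w.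
Definition strictK x (a b : env) := exists c, isBinder x c /\ Sub c phi /\ progressB c /\
  incl_s (key a c) (key b c) /\ exists w, key b c w /\ ~ key a c w.

Fixpoint ltL (l : list Vr) (a b : env) : Prop :=
  match l with
  | [] => False
  | x :: l' => strictK x a b \/ (eqV x a b /\ ltL l' a b)
  end.
Definition eqL (l : list Vr) (a b : env) := forall x, In x l -> eqV x a b.
Definition leL l a b := ltL l a b \/ eqL l a b.

Lemma key_iff x c (a b : env) : isBinder x c -> (forall w, a x w <-> b x w) ->
  forall w, key a c w <-> key b c w.
Proof. intros [[a' E]|[a' E]] H w; subst; simpl; rewrite H; tauto. Qed.

Lemma strictK_unique x c a b : strictK x a b -> isBinder x c -> Sub c phi ->
  incl_s (key a c) (key b c) /\ exists w, key b c w /\ ~ key a c w.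
Proof.
  intros [c' [Hb [Hs [_ H]]]] Hb' Hs'. rewrite (bind_unique Hnd Hb' Hb Hs' Hs); auto.
Qed.

Lemma eqV_refl x a : eqV x a a.
Proof. intros _ w; tauto. Qed.
Lemma eqV_sym x a b : eqV x a b -> eqV x b a.
Proof. intros H Hp w; rewrite (H Hp); tauto. Qed.
Lemma eqV_trans x a b c : eqV x a b -> eqV x b c -> eqV x a c.
Proof. intros H1 H2 Hp w; rewrite (H1 Hp); auto. Qed.

Lemma strictK_prog x a b : strictK x a b -> progV x.
Proof. intros [c [H1 [H2 [H3 _]]]]; exists c; auto. Qed.

Lemma strictK_trans x a b c : strictK x a b -> strictK x b c -> strictK x a c.
Proof.
  intros [c1 [H1 [H2 [H3 [H4 [w [H5 H6]]]]]]] Hbc.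
  destruct (strictK_unique Hbc H1 H2) as [H7 [w' [H8 H9]]].
  exists c1; split; [auto|split; [auto|split; [auto|split]]].
  - intros u Hu; apply H7, H4, Hu.
  - exists w'; split; auto.
Qed.

Lemma eq_strictK x a b c : eqV x a b -> strictK x b c -> strictK x a c.
Proof.
  intros He [c1 [H1 [H2 [H3 [H4 [w [H5 H6]]]]]]].
  assert (Hp : progV x) by (exists c1; auto).
  pose proof (@key_iff x c1 _ _ H1 (He Hp)) as E.
  exists c1; split; [auto|split; [auto|split; [auto|split]]].
  - intros u Hu; apply H4; apply E; auto.
  - exists w; split; auto; rewrite E; auto.
Qed.

Lemma strictK_eq x a b c : strictK x a b -> eqV x b c -> strictK x a c.
Proof.
  intros [c1 [H1 [H2 [H3 [H4 [w [H5 H6]]]]]]] He.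
  assert (Hp : progV x) by (exists c1; auto).
  pose proof (@key_iff x c1 _ _ H1 (He Hp)) as E.
  exists c1; split; [auto|split; [auto|split; [auto|split]]].
  - intros u Hu; apply E; auto.
  - exists w; split; auto; rewrite <- E; auto.
Qed.

Lemma strictK_irrefl x a : strictK x a a -> False.
Proof. intros [c1 [_ [_ [_ [_ [w [H1 H2]]]]]]]; auto. Qed.

Lemma strictK_not_eq x a b : strictK x a b -> eqV x a b -> False.
Proof. intros H1 H2; apply (strictK_irrefl (strictK_eq H1 (eqV_sym H2))). Qed.

Lemma ltL_irrefl l a : ltL l a a -> False.
Proof. induction l; simpl; auto. intros [H|[_ H]]; eauto using strictK_irrefl. Qed.

Lemma ltL_trans l a b c : ltL l a b -> ltL l b c -> ltL l a c.
Proof.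
  induction l; simpl; auto.
  intros [H1|[H1 H1']] [H2|[H2 H2']].
  - left; eapply strictK_trans; eauto.
  - left; eapply strictK_eq; eauto.
  - left; eapply eq_strictK; eauto.
  - right; split; eauto using eqV_trans.
Qed.

Lemma eq_ltL l a b c : eqL l a b -> ltL l b c -> ltL l a c.
Proof.
  induction l; simpl; auto. intros He [H|[H H']].
  - left; eapply eq_strictK; [apply He; simpl; auto|exact H].
  - right; split; [eapply eqV_trans; [apply He; simpl; auto|exact H]|]. apply IHl; auto.
    intros y Hy; apply He; simpl; auto.
Qed.

Lemma ltL_eq l a b c : ltL l a b -> eqL l b c -> ltL l a c.
Proof.
  induction l; simpl; auto. intros [H|[H H']] He.
  - left; eapply strictK_eq; [exact H|apply He; simpl; auto].
  - right; split; [eapply eqV_trans; [exact H|apply He; simpl; auto]|]. apply IHl; auto.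
    intros y Hy; apply He; simpl; auto.
Qed.

Lemma eqL_trans l a b c : eqL l a b -> eqL l b c -> eqL l a c.
Proof. intros H1 H2 x Hx; eapply eqV_trans; eauto. Qed.
Lemma eqL_sym l a b : eqL l a b -> eqL l b a.
Proof. intros H1 x Hx; apply eqV_sym; auto. Qed.
Lemma eqL_refl l a : eqL l a a.
Proof. intros x _; apply eqV_refl. Qed.

Lemma leL_trans l a b c : leL l a b -> leL l b c -> leL l a c.
Proof.
  intros [H1|H1] [H2|H2]; [left; eapply ltL_trans; eauto | left; eapply ltL_eq; eauto
  | left; eapply eq_ltL; eauto | right; eapply eqL_trans; eauto].
Qed.

Lemma leL_ltL l a b c : leL l a b -> ltL l b c -> ltL l a c.
Proof. intros [H1|H1] H2; [eapply ltL_trans|eapply eq_ltL]; eauto. Qed.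
Lemma ltL_leL l a b c : ltL l a b -> leL l b c -> ltL l a c.
Proof. intros H1 [H2|H2]; [eapply ltL_trans|eapply ltL_eq]; eauto. Qed.

Lemma ltL_app l1 l2 a b : ltL (l1 ++ l2) a b -> ltL l1 a b \/ (eqL l1 a b /\ ltL l2 a b).
Proof.
  induction l1; simpl; intros H.
  - right; split; auto; intros x [].
  - destruct H as [H|[H H']]; auto.
    destruct (IHl1 H') as [H1|[H1 H2]]; auto.
    right; split; auto. intros x [<-|Hx]; auto.
Qed.

Lemma leL_prefix l1 l2 a b : leL (l1 ++ l2) a b -> leL l1 a b.
Proof.
  intros [H|H].
  - destruct (ltL_app l1 l2 a b H) as [H1|[H1 _]]; [left|right]; auto.
  - right; intros x Hx; apply H; apply in_or_app; auto.
Qed.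

Lemma ltL_snoc l x a b : ltL (l ++ [x]) a b <-> ltL l a b \/ (eqL l a b /\ strictK x a b).
Proof.
  split.
  - intros H; destruct (ltL_app l [x] a b H) as [H1|[H1 [H2|[_ []]]]]; auto.
  - induction l; simpl; intros [H|[H1 H2]]; try contradiction; auto.
    + destruct H as [H|[H H']]; auto.
    + assert (Ha : eqV a0 a b) by (apply H1; simpl; auto).
      right; split; auto. apply IHl; right; split; auto.
      intros y Hy; apply H1; simpl; auto.
Qed.

Lemma eqL_snoc l x a b : eqL (l ++ [x]) a b <-> eqL l a b /\ eqV x a b.
Proof.
  split.
  - intros H; split; [intros y Hy|]; apply H; apply in_or_app; simpl; auto.
  - intros [H1 H2] y Hy; apply in_app_or in Hy; destruct Hy as [Hy|[<-|[]]]; auto.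
Qed.


Lemma Op_ext (x : Vr) (c : form) (a b : env) : isBinder x c ->
  (forall z, freeIn z c -> forall w, a z w <-> b z w) -> Op a c = Op b c.
Proof.
  intros [[a' E]|[a' E]] H; subst; simpl; apply functional_extensionality; intros T;
  apply set_ext; intros w; unfold Fop.
  - apply sem_ext; intros z Hz u. destruct (classic (z = x)) as [->|Hne].
    + rewrite !upd_eq; tauto.
    + rewrite !upd_neq; auto. apply H; constructor; auto.
  - assert (E : sem (upd a x (fun u => ~ T u)) a' w <-> sem (upd b x (fun u => ~ T u)) a' w).
    { apply sem_ext; intros z Hz u. destruct (classic (z = x)) as [->|Hne].
      + rewrite !upd_eq; tauto.
      + rewrite !upd_neq; auto. apply H; constructor; auto. }
    rewrite E; tauto.
Qed.

Lemma key_eq (x : Vr) (c : form) (a b : env) : isBinder x c ->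
  (forall w, a x w <-> b x w) -> key a c = key b c.
Proof. intros Hb H; apply set_ext; apply (@key_iff x c a b Hb H). Qed.

Lemma key_inj (x : Vr) (c : form) (a b : env) : isBinder x c ->
  (forall w, key a c w <-> key b c w) -> forall w, a x w <-> b x w.
Proof.
  intros [[a' E]|[a' E]] H w; subst; simpl in H; [apply H|].
  specialize (H w); split; intros H1; apply NNPP; tauto.
Qed.

Lemma binder_not_free (x z : Vr) (c : form) : isBinder x c -> freeIn z c -> z <> x.
Proof. intros [[a E]|[a E]] H; subst; inversion H; subst; congruence. Qed.

Lemma condB_ext (x : Vr) (c : form) (a b : env) : isBinder x c ->
  (forall z, (z = x \/ freeIn z c) -> forall w, a z w <-> b z w) ->
  condB a c -> condB b c.
Proof.
  intros Hb H [Hp Hn]; split.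
  - intros P. rewrite <- (@Op_ext x c a b Hb (fun z Hz => H z (or_intror Hz))).
    rewrite <- (@key_eq x c a b Hb (H x (or_introl eq_refl))). auto.
  - intros nP y Hy w. rewrite (binder_var Hy Hb) in *.
    rewrite <- (H x (or_introl eq_refl)). rewrite (Hn nP x Hb w).
    apply sem_ext; intros z Hz u; apply H; auto.
Qed.

Lemma NoDup_split_notin (l r : list Vr) x : NoDup (l ++ x :: r) -> ~ In x l.
Proof.
  intros H Hx. eapply NoDup_app_both; eauto. simpl; auto.
Qed.

Lemma agree l0 : forall r a b, cons a -> cons b -> L = l0 ++ r -> eqL l0 a b ->
  forall y, In y l0 -> forall w, a y w <-> b y w.
Proof.
  induction l0 as [|x l IH] using rev_ind; intros r a b Ha Hb HL He y Hy w.
  - destruct Hy.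
  - rewrite <- app_assoc in HL; simpl in HL.
    apply eqL_snoc in He as [He1 He2].
    apply in_app_or in Hy as [Hy|[<-|[]]].
    + eapply IH; eauto.
    + assert (HxL : In x L) by (rewrite HL; apply in_or_app; simpl; auto).
      destruct (In_L_binder x HxL) as [c [Hbc Hsc]].
      destruct (classic (progressB c)) as [P|nP].
      * apply He2; exists c; auto.
      * rewrite (proj2 (proj1 Ha x c Hbc Hsc) nP x Hbc w).
        rewrite (proj2 (proj1 Hb x c Hbc Hsc) nP x Hbc w).
        apply sem_ext; intros z Hz u. eapply IH; eauto.
        eapply free_before; eauto.
Qed.

Lemma least_lex l : forall r (S : env -> Prop), L = l ++ r -> (forall rho, S rho -> cons rho) ->
  (exists rho, S rho) -> exists m, S m /\ forall rho, S rho -> leL l m rho.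
Proof.
  induction l as [|x l IH] using rev_ind; intros r S HL HS [rho0 H0].
  - exists rho0; split; auto; intros rho _; right; intros y [].
  - rewrite <- app_assoc in HL; simpl in HL.
    destruct (IH _ S HL HS (ex_intro _ rho0 H0)) as [m0 [Hm0 Hmin]].
    assert (HxL : In x L) by (rewrite HL; apply in_or_app; simpl; auto).
    destruct (In_L_binder x HxL) as [c [Hbc Hsc]].
    destruct (classic (progressB c)) as [P|nP].
    + set (K := fun T => exists rho, (S rho /\ eqL l rho m0) /\ key rho c = T).
      assert (HK : forall T, K T -> tower (Op m0 c) T).
      { intros T [rho [[Hr He] <-]].
        rewrite <- (@Op_ext x c rho m0 Hbc).
        - apply (proj1 (proj1 (HS rho Hr) x c Hbc Hsc)); auto.
        - intros z Hz u. eapply agree; eauto.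
          eapply free_before; eauto. }
      destruct (tower_least (@Op_mono m0 x c Hbc Hsc) K HK (ex_intro _ (key m0 c) (ex_intro _ m0 (conj (conj Hm0 (eqL_refl _ _)) eq_refl))))
        as [T [[m [[Hm Hem] <-]] Hleast]].
      exists m; split; auto. intros rho Hr.
      destruct (Hmin rho Hr) as [Hlt|Heq].
      * left; apply ltL_snoc; left. eapply eq_ltL; eauto.
      * assert (Hinc : incl_s (key m c) (key rho c)).
        { apply Hleast. exists rho; split; auto; split; auto; apply eqL_sym; auto. }
        destruct (classic (exists w, key rho c w /\ ~ key m c w)) as [Hs|Hs].
        -- left; apply ltL_snoc; right; split.
           ++ eapply eqL_trans; eauto.
           ++ exists c; repeat split; auto.
        -- right; apply eqL_snoc; split.
           ++ eapply eqL_trans; eauto.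
           ++ intros _. apply (@key_inj x c m rho Hbc). intros w; split; auto.
              intros Hw; apply NNPP; intro Hn; apply Hs; exists w; auto.
    + exists m0; split; auto. intros rho Hr.
      destruct (Hmin rho Hr) as [Hlt|Heq].
      * left; apply ltL_snoc; auto.
      * right; apply eqL_snoc; split; auto.
        intros [c' [Hb' [Hs' P']]]. rewrite (bind_unique Hnd Hb' Hbc Hs' Hsc) in P'. contradiction.
Qed.

Definition consP (l : list Vr) (rho : env) :=
  forall y c, In y l -> isBinder y c -> Sub c phi -> condB rho c.
Definition UB (rho : env) := forall x, ~ In x L -> forall w, ~ rho x w.

Lemma cons_of rho : consP L rho -> UB rho -> cons rho.
Proof. intros H1 H2; split; auto. intros x c Hb Hs; eapply H1; eauto; eapply binder_in; eauto. Qed.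

Lemma ext_step l x r c (rho : env) (V : set) : L = l ++ x :: r -> isBinder x c -> Sub c phi ->
  consP l rho -> condB (upd rho x V) c -> consP (l ++ [x]) (upd rho x V).
Proof.
  intros HL Hb Hs HP Hc y c' Hy Hb' Hs'.
  apply in_app_or in Hy as [Hy|[<-|[]]].
  - assert (Hx : ~ In x l) by (apply (NoDup_split_notin l r); rewrite <- HL; auto).
    apply (@condB_ext y c' rho (upd rho x V) Hb'); [|eapply HP; eauto].
    intros z Hz w. rewrite upd_neq; [tauto|].
    destruct Hz as [->|Hz].
    + intros ->; contradiction.
    + destruct (in_split _ _ Hy) as [l1 [l2 El]].
      assert (Hz' : In z l1).
      { eapply (@free_before y c' z l1 (l2 ++ x :: r)); eauto. rewrite HL, El, <- app_assoc; reflexivity. }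
      intros ->; apply Hx; rewrite El; apply in_or_app; auto.
  - rewrite (bind_unique Hnd Hb' Hb Hs' Hs); auto.
Qed.

Lemma complete r : forall l (rho : env), L = l ++ r -> consP l rho -> UB rho ->
  exists rho', cons rho' /\ forall y, In y l -> forall w, rho' y w <-> rho y w.
Proof.
  induction r as [|x r IH]; intros l rho HL HP HU.
  - rewrite app_nil_r in HL; subst. exists rho; split; [apply cons_of; auto| tauto].
  - assert (HxL : In x L) by (rewrite HL; apply in_or_app; simpl; auto).
    destruct (In_L_binder x HxL) as [c [Hbc Hsc]].
    assert (Hx : ~ In x l) by (apply (NoDup_split_notin l r); rewrite <- HL; auto).
    assert (Hfc : forall z, freeIn z c -> z <> x) by (intros z Hz; eapply binder_not_free; eauto).
    assert (Hnew : exists V : set, condB (upd rho x V) c).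
    { destruct (classic (progressB c)) as [P|nP].
      - exists (valOf c (fun _ => False)). split; [|intros; contradiction].
        intros _.
        replace (key (upd rho x (valOf c (fun _ => False))) c) with (fun _ : W M => False).
        + apply tower_empty.
        + apply set_ext; intros w.
          destruct Hbc as [[a E]|[a E]]; subst; simpl; rewrite upd_eq; tauto.
      - exists (sem rho c). split; [intros; contradiction|].
        intros _ y Hy w. rewrite (binder_var Hy Hbc), upd_eq.
        apply sem_ext; intros z Hz u. rewrite upd_neq; [tauto|auto]. }
    destruct Hnew as [V HV].
    assert (HP1 : consP (l ++ [x]) (upd rho x V)) by (eapply ext_step; eauto).
    assert (HU1 : UB (upd rho x V)).
    { intros z Hz w. rewrite upd_neq; [apply HU; auto|]. intros ->; contradiction. }
    destruct (IH (l ++ [x]) (upd rho x V) ltac:(rewrite <- app_assoc; auto) HP1 HU1)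
      as [rho' [Hc Hag]].
    exists rho'; split; auto. intros y Hy w.
    rewrite Hag by (apply in_or_app; auto). rewrite upd_neq; [tauto|].
    intros ->; contradiction.
Qed.

Lemma cons_exists : exists rho, cons rho.
Proof.
  destruct (@complete L [] (fun _ _ => False)) as [rho [H _]]; auto.
  - intros y c [].
  - intros x _ w [].
  - exists rho; auto.
Qed.

Lemma reset (rho : env) l0 r x c (T : set) : cons rho -> L = l0 ++ x :: r ->
  isBinder x c -> Sub c phi -> progressB c -> tower (Op rho c) T ->
  exists rho', cons rho' /\ (forall y, In y l0 -> forall w, rho' y w <-> rho y w) /\
    (forall w, key rho' c w <-> T w).
Proof.
  intros Hc HL Hb Hs P HT.
  assert (Hx : ~ In x l0) by (apply (NoDup_split_notin l0 r); rewrite <- HL; auto).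
  assert (Hfc : forall z, freeIn z c -> z <> x) by (intros z Hz; eapply binder_not_free; eauto).
  assert (Hkey : forall w, key (upd rho x (valOf c T)) c w <-> T w).
  { intros w; destruct Hb as [[a E]|[a E]]; subst; simpl; rewrite upd_eq; [tauto|].
    split; intros H; [apply NNPP|]; tauto. }
  assert (HV : condB (upd rho x (valOf c T)) c).
  { split; [|intros; contradiction].
    intros _.
    replace (key (upd rho x (valOf c T)) c) with T by (symmetry; apply set_ext; exact Hkey).
    rewrite (@Op_ext x c (upd rho x (valOf c T)) rho Hb); auto.
    intros z Hz w; rewrite upd_neq; [tauto|auto]. }
  assert (HP0 : consP l0 rho) by (intros y c' _ Hb' Hs'; apply (proj1 Hc y c' Hb' Hs')).
  assert (HP1 : consP (l0 ++ [x]) (upd rho x (valOf c T))) by (eapply ext_step; eauto).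
  assert (HU1 : UB (upd rho x (valOf c T))).
  { intros z Hz w. assert (z <> x) by (intros ->; apply Hz; rewrite HL; apply in_or_app; simpl; auto).
    rewrite upd_neq; auto. apply (proj2 Hc); auto. }
  destruct (@complete r (l0 ++ [x]) _ ltac:(rewrite <- app_assoc; auto) HP1 HU1) as [rho' [Hc' Hag]].
  exists rho'; split; auto; split.
  - intros y Hy w. rewrite Hag by (apply in_or_app; auto). rewrite upd_neq; [tauto|].
    intros ->; contradiction.
  - intros w. rewrite <- Hkey. apply (@key_iff x c rho' _ Hb).
    intros u; apply Hag; apply in_or_app; simpl; auto.
Qed.

Definition truthN (rho : env) (n : node Pr Vr) (v : W M) : Prop :=
  match n with
  | NF a => sem rho a v
  | NDia a => exists u, R M v u /\ sem rho a u
  | NImp a b => ~ sem rho a v \/ sem rho b v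
  end.

Definition good (rho : env) (p : position Vr M) : Prop :=
  match p with
  | Pos _ v n q => match roleP pl q with Ver => truthN rho n v | Ref => ~ truthN rho n v end
  end.

Lemma own_iff (p : position Vr M) :
  ownsPos phi p pl <-> (verOwned phi p <-> roleP pl (roleOf p) = Ver).
Proof.
  destruct p as [v n q]; destruct (classic (verOwned phi (Pos M v n q))) as [H|H];
  destruct pl, q; simpl in *;
  assert (Ref <> Ver) by discriminate; assert (Ver <> Ref) by discriminate;
  assert (Ver = Ver) by reflexivity; assert (Ref = Ref) by reflexivity; tauto.
Qed.

Definition simpleN (n : node Pr Vr) : Prop :=
  match n with NF (FV _) | NF (FMu _ _) | NF (FNu _ _) => False | _ => True end.

Ltac roles := repeat (rewrite ?roleP_dual; match goal with H : roleP pl _ = _ |- _ => rewrite H end); simpl.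

Lemma local_simple (rho : env) v (n : node Pr Vr) q : simpleN n -> good rho (Pos M v n q) ->
  (ownsPos phi (Pos M v n q) pl -> (exists p', move phi (Pos M v n q) p') ->
     exists p', move phi (Pos M v n q) p' /\ good rho p') /\
  (~ ownsPos phi (Pos M v n q) pl -> forall p', move phi (Pos M v n q) p' -> good rho p').
Proof.
  intros Hs Hg. rewrite own_iff. simpl roleOf.
  destruct n as [a|a|a b]; [destruct a| |]; simpl in Hs; try contradiction;
  unfold good in Hg; simpl verOwned;
  destruct (roleP pl q) eqn:Er; simpl in Hg; split; intros Ho.
  1-8: first [intros p' Hm; inversion Hm | intros [p' Hm]; inversion Hm].
  - exfalso; destruct Ho as [_ H]; auto.
  - intros p' Hm; inversion Hm; subst; simpl; roles; tauto.
  - intros _. apply not_and_or in Hg as [H|H];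
      [exists (Pos M v (NF a1) q) | exists (Pos M v (NF a2) q)];
      split; try constructor; simpl; roles; auto.
  - exfalso; apply Ho; split; intros; [contradiction|discriminate].
  - intros _. destruct Hg as [H|H];
      [exists (Pos M v (NF a1) q) | exists (Pos M v (NF a2) q)];
      split; try constructor; simpl; roles; auto.
  - exfalso; apply Ho; tauto.
  - exfalso; destruct Ho as [H _]; specialize (H I); discriminate.
  - intros p' Hm; inversion Hm; subst; simpl; roles; tauto.
  - exfalso; destruct Ho as [_ H]; auto.
  - intros p' Hm; inversion Hm; subst; simpl; roles.
    destruct (classic (sem rho a1 u)); auto.
  - intros _. apply not_all_ex_not in Hg as [u Hu].
    apply imply_to_and in Hu as [Hu1 Hu2]. apply imply_to_and in Hu2 as [Hu2 Hu3].
    exists (Pos M u (NImp a1 a2) q); split; [constructor; auto|]; simpl; roles; tauto.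
  - exfalso; apply Ho; split; intros; [contradiction|discriminate].
  - exfalso; destruct Ho as [_ H]; auto.
  - intros p' Hm; inversion Hm; subst; simpl; roles; eauto.
  - intros _. apply not_all_ex_not in Hg as [v' Hv].
    apply not_all_ex_not in Hv as [u Hu].
    apply imply_to_and in Hu as [Hu1 Hu2]. apply imply_to_and in Hu2 as [Hu2 Hu3].
    exists (Pos M u (NF a) q); split; [econstructor; eauto|]; simpl; roles; tauto.
  - exfalso; apply Ho; split; intros; [contradiction|discriminate].
  - exfalso; destruct Ho as [_ H]; auto.
  - intros p' Hm; inversion Hm; subst; simpl; roles; eauto.
  - intros _. apply not_all_ex_not in Hg as [u Hu].
    apply imply_to_and in Hu as [Hu1 Hu2].
    exists (Pos M u (NDia a) q); split; [constructor; auto|]; simpl; roles; tauto.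
  - exfalso; apply Ho; split; intros; [contradiction|discriminate].
  - intros _. destruct Hg as [u [Hu1 Hu2]].
    exists (Pos M u (NF a) q); split; [constructor; auto|]; simpl; roles; auto.
  - exfalso; apply Ho; tauto.
  - exfalso; destruct Ho as [H _]; specialize (H I); discriminate.
  - intros p' Hm; inversion Hm; subst; simpl; roles; eauto.
  - intros _. destruct Hg as [H|H];
      [exists (Pos M v (NF a) (dual q)) | exists (Pos M v (NF b) q)];
      split; try constructor; simpl; roles; auto.
  - exfalso; apply Ho; tauto.
  - exfalso; destruct Ho as [H _]; specialize (H I); discriminate.
  - intros p' Hm; inversion Hm; subst; simpl; roles.
    + apply NNPP; tauto.
    + tauto.
Qed.


Lemma terminal (rho : env) (p : position Vr M) : cons rho -> good rho p ->
  (forall p', ~ move phi p p') -> ~ ownsPos phi p pl.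
Proof.
  intros Hc Hg Hn. rewrite own_iff. destruct p as [v n q]. simpl roleOf.
  unfold good in Hg.
  destruct n as [a|a|a b]; [destruct a| |]; simpl verOwned;
  destruct (roleP pl q) eqn:Er; simpl in Hg; intros Ho.
  all: try (apply (Hn (Pos M v (NF a1) q)); constructor; fail).
  all: try (apply (Hn (Pos M v (NImp a1 a2) q)); constructor; apply le_refl; fail).
  all: try (apply (Hn (Pos M v (NDia a) q)); constructor; apply le_refl; fail).
  all: try (apply (Hn (Pos M v (NF a) q)); constructor; fail).
  all: try (apply (Hn (Pos M v (NF b) q)); constructor; fail).
  - exact (proj2 Ho eq_refl Hg).
  - discriminate (proj1 Ho Hg).
  -
    destruct (classic (In x L)) as [HL|HL].
    + destruct (In_L_binder x HL) as [c [[[a E]|[a E]] Hs]]; subst;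
        [apply (Hn (Pos M v (NF (FMu x a)) q)) | apply (Hn (Pos M v (NF (FNu x a)) q))];
        constructor; auto.
    + apply (proj2 Hc x HL v Hg).
  -
    assert (Hno : ~ exists a, Sub (FNu x a) phi).
    { intros [a Ha]; apply (Hn (Pos M v (NF (FNu x a)) q)); constructor; auto. }
    specialize (proj1 Ho Hno); discriminate.
  - exact (proj2 Ho eq_refl Hg).
  - discriminate (proj1 Ho Hg).
  -
    specialize (proj2 Ho eq_refl); auto.
  - apply Hg. intros v' u H1 H2. exfalso; apply (Hn (Pos M u (NF a) q)); econstructor; eauto.
  - destruct Hg as [u [Hu1 Hu2]]. apply (Hn (Pos M u (NF a) q)); constructor; auto.
  - specialize (proj1 Ho I); discriminate.
Qed.

Definition roleOK (c : form) (q : role) :=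
  (isMu c /\ roleP pl q = Ver) \/ (isNu c /\ roleP pl q = Ref).

Lemma prog_role (c : form) x q : progressB c -> isBinder x c -> occ phi Ver c q -> roleOK c q.
Proof.
  intros [q' [Ho H]] Hb Ho'. rewrite (occ_unique Hnd Hb Ho' Ho); auto.
Qed.

Lemma B1 (rho : env) x c q v : isBinder x c -> roleOK c q ->
  (good rho (Pos M v (NF (FV x)) q) <-> key rho c v).
Proof.
  intros [[a E]|[a E]] [[H1 H2]|[H1 H2]]; subst; simpl in *; try contradiction;
  rewrite H2; simpl; tauto.
Qed.

Lemma B2a (rho : env) x c q v (T : set) : isBinder x c -> Sub c phi -> roleOK c q ->
  tower (Op rho c) T -> T v -> good rho (Pos M v (NF c) q).
Proof.
  intros Hb Hs Hr HT Hv. pose proof (@Op_mono rho x c Hb Hs) as Hm.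
  destruct (binder_posv Hb Hs) as [a [[E|E] Hp]]; subst;
  destruct Hr as [[H1 H2]|[H1 H2]]; simpl in *; try contradiction; rewrite H2.
  - intros P HP. exact (tower_below Hm (P:=P) HP HT v Hv).
  - intros [A [HA HAv]].
    assert (HP : incl_s (Op rho (FNu x a) (fun w => ~ A w)) (fun w => ~ A w)).
    { simpl; intros w Hw HAw; apply Hw.
      exact (Fop_mono rho Hp (A:=A) (B:=fun u => ~~A u) (fun u Hu Hu' => Hu' Hu) w (HA w HAw)). }
    exact (tower_below Hm HP HT v Hv HAv).
Qed.

Lemma B2b (rho : env) x c q v : isBinder x c -> Sub c phi -> roleOK c q ->
  good rho (Pos M v (NF c) q) -> inLfp (Op rho c) v.
Proof.
  intros Hb Hs Hr Hg.
  destruct (binder_posv Hb Hs) as [a [[E|E] Hp]]; subst;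
  destruct Hr as [[H1 H2]|[H1 H2]]; simpl in *; try contradiction; rewrite H2 in Hg;
  simpl in Hg.
  - intros P HP; apply Hg; auto.
  - intros P HP. apply NNPP; intros HPv. apply Hg.
    exists (fun w => ~ P w); split; auto.
    intros w Hw. apply NNPP; intros Hf. apply Hw, HP. simpl. exact Hf.
Qed.

Lemma B3 (rho rho' : env) x a c q v (T : set) : (c = FMu x a \/ c = FNu x a) -> roleOK c q ->
  (forall z, freeIn z a -> z <> x -> forall w, rho' z w <-> rho z w) ->
  (forall w, key rho' c w <-> T w) ->
  (good rho' (Pos M v (NF a) q) <-> Op rho c T v).
Proof.
  intros E Hr Hag Hk.
  destruct E; subst; destruct Hr as [[H1 H2]|[H1 H2]]; simpl in *; try contradiction;
  rewrite H2; simpl; unfold Fop.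
  - apply sem_ext; intros z Hz u. destruct (classic (z = x)) as [->|Hne].
    + rewrite upd_eq; apply Hk.
    + rewrite upd_neq; auto.
  - assert (E : sem rho' a v <-> sem (upd rho x (fun u => ~ T u)) a v).
    { apply sem_ext; intros z Hz u. destruct (classic (z = x)) as [->|Hne].
      + rewrite upd_eq. specialize (Hk u). split; intros H; [intro; apply Hk in H0; auto|].
        apply NNPP; intro H'; apply H; apply Hk; auto.
      + rewrite upd_neq; auto. }
    rewrite E; tauto.
Qed.

Lemma binder_shape (x : Vr) (c : form) : isBinder x c -> exists a, c = FMu x a \/ c = FNu x a.
Proof. intros [[a E]|[a E]]; exists a; auto. Qed.

Lemma nonprog_truth (rho : env) x a c v : cons rho -> (c = FMu x a \/ c = FNu x a) ->
  Sub c phi -> ~ progressB c -> (sem rho c v <-> sem rho a v).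
Proof.
  intros Hc E Hs nP.
  assert (Hb : isBinder x c) by (destruct E; [left|right]; eauto).
  destruct (binder_posv Hb Hs) as [a' [E' Hp]].
  assert (a' = a) by (destruct E, E'; subst; inversion H0; auto). subst a'.
  pose proof (proj2 (proj1 Hc x c Hb Hs) nP x Hb) as Hx.
  assert (Hagr : forall w, sem (upd rho x (sem rho c)) a w <-> sem rho a w).
  { intros w; apply sem_ext; intros z _ u. destruct (classic (z = x)) as [->|Hne].
    - rewrite upd_eq; rewrite Hx; tauto.
    - rewrite upd_neq; tauto. }
  destruct E; subst.
  - rewrite lfp_unfold by auto. unfold Fop. apply Hagr.
  - rewrite gfp_unfold by auto. unfold Fop. apply Hagr.
Qed.

Lemma var_step (rho : env) v x q p' : cons rho -> good rho (Pos M v (NF (FV x)) q) ->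
  occ phi Ver (FV x) q -> move phi (Pos M v (NF (FV x)) q) p' -> good rho p'.
Proof.
  intros Hc Hg Ho Hm.
  assert (Hex : exists c, isBinder x c /\ Sub c phi /\ p' = Pos M v (NF c) q).
  { inversion Hm; subst.
    - eexists; split; [left; eauto|split; [eassumption|reflexivity]].
    - eexists; split; [right; eauto|split; [eassumption|reflexivity]]. }
  destruct Hex as [c [Hb [Hs ->]]].
  assert (Hoc : occ phi Ver c q).
  { destruct (var_role Hmu (Sub_refl phi) Ho) as [[Hf _]|[c' [Hb' Ho']]].
    - exfalso; apply (Hsent Hf).
    - rewrite (bind_unique Hnd Hb Hb' Hs (occ_Sub Ho')); auto. }
  destruct (classic (progressB c)) as [P|nP].
  - pose proof (prog_role P Hb Hoc) as Hr.
    apply (@B2a rho x c q v (key rho c) Hb Hs Hr).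
    + apply (proj1 (proj1 Hc x c Hb Hs)); auto.
    + apply (@B1 rho x c q v Hb Hr); auto.
  - destruct (binder_shape Hb) as [a E].
    unfold good in *. pose proof (proj2 (proj1 Hc x c Hb Hs) nP x Hb v) as Hx.
    simpl in *. destruct (roleP pl q); rewrite <- Hx; auto.
Qed.

Lemma bin_nonprog_step (rho : env) v c x a q : cons rho -> (c = FMu x a \/ c = FNu x a) ->
  Sub c phi -> ~ progressB c -> good rho (Pos M v (NF c) q) -> good rho (Pos M v (NF a) q).
Proof.
  intros Hc E Hs nP. unfold good; simpl. pose proof (nonprog_truth v Hc E Hs nP) as H.
  destruct (roleP pl q); tauto.
Qed.

Lemma free_body (x z : Vr) (a c : form) : (c = FMu x a \/ c = FNu x a) -> freeIn z a -> z <> x -> freeIn z c.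
Proof. intros [E|E] H1 H2; subst; constructor; auto. Qed.

Lemma bin_prog_step (rho : env) v c x a q l0 r : cons rho -> (c = FMu x a \/ c = FNu x a) ->
  Sub c phi -> progressB c -> occ phi Ver c q -> L = l0 ++ x :: r ->
  good rho (Pos M v (NF c) q) ->
  exists rho', cons rho' /\ (forall y, In y l0 -> forall w, rho' y w <-> rho y w) /\
    good rho' (Pos M v (NF a) q).
Proof.
  intros Hc E Hs P Ho HL Hg.
  assert (Hb : isBinder x c) by (destruct E; [left|right]; eauto).
  pose proof (prog_role P Hb Ho) as Hr.
  pose proof (@B2b rho x c q v Hb Hs Hr Hg) as Hl.
  destruct (tower_top (@Op_mono rho x c Hb Hs) Hl) as [U [HU HUv]].
  destruct (@reset rho l0 r x c U Hc HL Hb Hs P HU) as [rho' [Hc' [Hag Hk]]].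
  exists rho'; split; auto; split; auto.
  apply (@B3 rho rho' x a c q v U E Hr); auto.
  intros z Hz Hne w. apply Hag. eapply (@free_before x c z l0 r); eauto.
  eapply free_body; eauto.
Qed.

Lemma two_step (rho : env) v c x a q l0 r : cons rho -> (c = FMu x a \/ c = FNu x a) ->
  Sub c phi -> progressB c -> occ phi Ver c q -> L = l0 ++ x :: r ->
  good rho (Pos M v (NF (FV x)) q) ->
  exists rho', cons rho' /\ ltL (l0 ++ [x]) rho' rho /\ good rho' (Pos M v (NF a) q).
Proof.
  intros Hc E Hs P Ho HL Hg.
  assert (Hb : isBinder x c) by (destruct E; [left|right]; eauto).
  pose proof (prog_role P Hb Ho) as Hr.
  apply (@B1 rho x c q v Hb Hr) in Hg.
  assert (HT : tower (Op rho c) (key rho c)) by (apply (proj1 (proj1 Hc x c Hb Hs)); auto).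
  destruct (tower_pred (@Op_mono rho x c Hb Hs) v HT Hg) as [U [HU [HUi [HUv HOU]]]].
  destruct (@reset rho l0 r x c U Hc HL Hb Hs P HU) as [rho' [Hc' [Hag Hk]]].
  exists rho'; split; auto; split.
  - apply ltL_snoc; right; split.
    + intros y Hy _; apply Hag; auto.
    + exists c; split; auto; split; auto; split; auto; split.
      * intros w Hw; apply HUi, Hk, Hw.
      * exists v; split; auto. rewrite Hk; auto.
  - apply (@B3 rho rho' x a c q v U E Hr); auto.
    intros z Hz Hne w. apply Hag. eapply (@free_before x c z l0 r); eauto.
    eapply free_body; eauto.
Qed.

Variable w0 : W M.

Definition Gp (p : position Vr M) := exists rho, cons rho /\ good rho p.
Definition isLeast (p : position Vr M) (m : env) :=
  cons m /\ good m p /\ forall rho, cons rho -> good rho p -> leL L m rho.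

Definition sig (p : position Vr M) : env :=
  epsilon (inhabits (fun _ _ => False)) (isLeast p).

Lemma sig_spec p : Gp p -> isLeast p (sig p).
Proof.
  intros [rho0 [H1 H2]]. unfold sig. apply epsilon_spec.
  destruct (@least_lex L [] (fun rho => cons rho /\ good rho p) ltac:(rewrite app_nil_r; auto)
    ltac:(intros rho [H _]; auto) ltac:(exists rho0; auto)) as [m [[Hm1 Hm2] Hm3]].
  exists m; split; [auto|split; [auto|]]. intros rho H3 H4; apply Hm3; auto.
Qed.

Definition strat (p : position Vr M) : position Vr M :=
  epsilon (inhabits p) (fun p' => move phi p p' /\
    (good (sig p) p' \/ ~ exists p'', move phi p p'' /\ good (sig p) p'')).

Lemma strat_move p : (exists p', move phi p p') -> move phi p (strat p).
Proof.
  intros [p0 Hp0]. unfold strat.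
  apply (epsilon_spec (inhabits p) (fun p' => move phi p p' /\
    (good (sig p) p' \/ ~ exists p'', move phi p p'' /\ good (sig p) p''))).
  destruct (classic (exists p'', move phi p p'' /\ good (sig p) p'')) as [[p1 [H1 H2]]|H].
  - exists p1; auto.
  - exists p0; auto.
Qed.

Lemma strat_good p : (exists p', move phi p p' /\ good (sig p) p') ->
  move phi p (strat p) /\ good (sig p) (strat p).
Proof.
  intros Hex. unfold strat.
  destruct (epsilon_spec (inhabits p) (fun p' => move phi p p' /\
    (good (sig p) p' \/ ~ exists p'', move phi p p'' /\ good (sig p) p'')))
    as [H1 [H2|H2]]; [destruct Hex as [p1 [H1 H2]]; exists p1; auto | | ]; auto.
  contradiction.
Qed.

Lemma strat_for : strategy_for phi pl strat.
Proof. intros p _ _ H; apply strat_move; auto. Qed.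

Definition occP (p : position Vr M) : Prop :=
  match p with
  | Pos _ _ (NF a) q => occ phi Ver a q
  | Pos _ _ (NDia a) q => occ phi Ver (FDia a) q
  | Pos _ _ (NImp a b) q => occ phi Ver (FImp a b) q
  end.

Lemma occ_step (c d : form) q q' : occ phi Ver c q -> occ c q d q' -> occ phi Ver d q'.
Proof. intros; eapply occ_trans; eauto. Qed.

Lemma reach_occ p : reachable phi w0 p -> occP p.
Proof.
  induction 1 as [|p p' Hr IH Hm].
  - simpl. constructor.
  - inversion Hm; subst; simpl in *.
    all: try solve [apply (occ_trans IH); solve [repeat constructor | apply occ_AndR; constructor
                     | apply occ_OrR; constructor | apply occ_ImpR; constructor
                     | apply occ_ImpL; constructor]].
    all: match goal with
        | H : Sub (FMu ?x ?a) phi |- _ =>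
            destruct (var_role Hmu (Sub_refl phi) IH) as [[Hf _]|[c' [Hb' Ho']]];
            [exfalso; apply (Hsent Hf)
            | assert (Hb0 : isBinder x (FMu x a)) by (left; eauto);
              rewrite (bind_unique Hnd Hb0 Hb' H (occ_Sub Ho')); exact Ho']
        | H : Sub (FNu ?x ?a) phi |- _ =>
            destruct (var_role Hmu (Sub_refl phi) IH) as [[Hf _]|[c' [Hb' Ho']]];
            [exfalso; apply (Hsent Hf)
            | assert (Hb0 : isBinder x (FNu x a)) by (right; eauto);
              rewrite (bind_unique Hnd Hb0 Hb' H (occ_Sub Ho')); exact Ho']
        end.
Qed.


Definition isBinPos (p : position Vr M) : Prop :=
  match p with Pos _ _ (NF (FMu _ _)) _ | Pos _ _ (NF (FNu _ _)) _ => True | _ => False end.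

Lemma step_nonbin p p' : reachable phi w0 p -> Gp p -> move phi p p' ->
  (ownsPos phi p pl -> p' = strat p) -> ~ isBinPos p -> good (sig p) p'.
Proof.
  intros Hr HG Hm Hs Hnb.
  destruct (sig_spec HG) as [Hc [Hg _]].
  pose proof (reach_occ Hr) as Ho.
  destruct p as [v n q].
  assert (Hsimple : (exists x, n = NF (FV x)) \/ simpleN n).
  { destruct n as [a|a|a b]; [destruct a| |]; simpl in Hnb; try contradiction; simpl; eauto. }
  destruct Hsimple as [[x ->]|Hsn].
  - eapply var_step; eauto.
  - destruct (@local_simple (sig (Pos M v n q)) v n q Hsn Hg) as [H1 H2].
    destruct (classic (ownsPos phi (Pos M v n q) pl)) as [Hown|Hown].
    + rewrite (Hs Hown). apply strat_good. apply H1; eauto.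
    + apply H2; auto.
Qed.

Lemma step_bin_nonprog v c x a q p' : reachable phi w0 (Pos M v (NF c) q) -> Gp (Pos M v (NF c) q) ->
  move phi (Pos M v (NF c) q) p' -> (c = FMu x a \/ c = FNu x a) -> ~ progressB c ->
  p' = Pos M v (NF a) q /\ good (sig (Pos M v (NF c) q)) p'.
Proof.
  intros Hr HG Hm E nP.
  destruct (sig_spec HG) as [Hc [Hg _]].
  pose proof (occ_Sub (reach_occ Hr)) as Hs.
  assert (p' = Pos M v (NF a) q) by (destruct E; subst; inversion Hm; auto).
  subst p'; split; auto. eapply bin_nonprog_step; eauto.
Qed.

Lemma step_bin_prog v c x a q p' l0 r : reachable phi w0 (Pos M v (NF c) q) -> Gp (Pos M v (NF c) q) ->
  move phi (Pos M v (NF c) q) p' -> (c = FMu x a \/ c = FNu x a) -> progressB c ->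
  L = l0 ++ x :: r ->
  p' = Pos M v (NF a) q /\ exists rho', cons rho' /\
    (forall y, In y l0 -> forall w, rho' y w <-> sig (Pos M v (NF c) q) y w) /\ good rho' p'.
Proof.
  intros Hr HG Hm E P HL.
  destruct (sig_spec HG) as [Hc [Hg _]].
  pose proof (reach_occ Hr) as Ho. simpl in Ho.
  pose proof (occ_Sub Ho) as Hs.
  assert (p' = Pos M v (NF a) q) by (destruct E; subst; inversion Hm; auto).
  subst p'; split; auto. eapply bin_prog_step; eauto.
Qed.

Lemma step_G p p' : reachable phi w0 p -> Gp p -> move phi p p' ->
  (ownsPos phi p pl -> p' = strat p) -> Gp p'.
Proof.
  intros Hr HG Hm Hs.
  destruct (classic (isBinPos p)) as [Hb|Hb].
  - destruct p as [v n q]. destruct n as [c| |]; try contradiction.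
    destruct c as [| | | | | | | |x a|x a]; try contradiction.
    all: pose proof (occ_Sub (reach_occ Hr)) as Hsc; simpl in Hsc.
    1: assert (E : FMu x a = FMu x a \/ FMu x a = FNu x a) by auto.
    2: assert (E : FNu x a = FMu x a \/ FNu x a = FNu x a) by auto.
    all: match type of E with ?c = _ \/ _ =>
      destruct (classic (progressB c)) as [P|nP];
      [ assert (Hin : In x L) by (eapply binder_in; [|exact Hsc]; destruct E as [E|E]; [left|right]; eauto);
        destruct (in_split _ _ Hin) as [l0 [r HL]];
        destruct (@step_bin_prog _ _ _ _ _ _ l0 r Hr HG Hm E P HL) as [_ [rho' [Hc' [_ Hg']]]];
        exists rho'; auto
      | destruct (@step_bin_nonprog _ _ _ _ _ _ Hr HG Hm E nP) as [_ Hg'];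
        exists (sig (Pos M v (NF c) q)); split; auto; apply (sig_spec HG) ]
    end.
  - exists (sig p); split; [apply (sig_spec HG)|]. eapply step_nonbin; eauto.
Qed.

Lemma run_inv (f : nat -> position Vr M) n : f 0 = init M phi w0 -> Gp (init M phi w0) ->
  (forall i, i < n -> move phi (f i) (f (S i))) ->
  (forall i, i < n -> ownsPos phi (f i) pl -> f (S i) = strat (f i)) ->
  forall i, i <= n -> reachable phi w0 (f i) /\ Gp (f i).
Proof.
  intros H0 HG Hm Hs i; induction i; intros Hi.
  - rewrite H0; split; auto; constructor.
  - destruct IHi as [Hr Hg]; [lia|].
    split; [eapply reach_step; [exact Hr|apply Hm; lia]|].
    apply (@step_G (f i) (f (S i)) Hr Hg); [apply Hm; lia|intros; apply Hs; auto; lia].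
Qed.

Lemma finite_win (f : nat -> position Vr M) n : Gp (init M phi w0) -> finite_run phi w0 f n ->
  (forall i, i < n -> ownsPos phi (f i) pl -> f (S i) = strat (f i)) ->
  wins_finite phi pl f n.
Proof.
  intros HG [H0 [Hm Hn]] Hs.
  destruct (@run_inv f n H0 HG Hm Hs n (le_n n)) as [Hr Hg].
  destruct (sig_spec Hg) as [Hc [Hgood _]].
  exact (terminal Hc Hgood Hn).
Qed.

Definition nodeF (p : position Vr M) : form :=
  match p with
  | Pos _ _ (NF a) _ => a
  | Pos _ _ (NDia a) _ => FDia a
  | Pos _ _ (NImp a b) _ => FImp a b
  end.

Definition meas (p : position Vr M) : nat :=
  match p with
  | Pos _ _ (NF a) _ => 2 * size a
  | Pos _ _ (NDia a) _ => 2 * size a + 1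
  | Pos _ _ (NImp a b) _ => 2 * (size a + size b) + 1
  end.

Definition isVarPos (p : position Vr M) : Prop :=
  match p with Pos _ _ (NF (FV _)) _ => True | _ => False end.

Lemma meas_dec p p' : move phi p p' -> ~ isVarPos p -> meas p' < meas p.
Proof. intros Hm Hv; inversion Hm; subst; simpl in *; try contradiction; lia. Qed.

Lemma child_sub p p' : move phi p p' -> ~ isVarPos p -> Sub (nodeF p') (nodeF p).
Proof.
  intros Hm Hv; inversion Hm; subst; simpl in *; try contradiction;
  solve [repeat constructor | apply Sub_AndR; constructor | apply Sub_OrR; constructor
        | apply Sub_ImpR; constructor | apply Sub_ImpL; constructor].
Qed.

Lemma child_NF_size p v b q : move phi p (Pos M v (NF b) q) -> ~ isVarPos p -> size b < size (nodeF p).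
Proof. intros Hm Hv; inversion Hm; subst; simpl in *; try contradiction; lia. Qed.

Lemma var_move v x q p' : move phi (Pos M v (NF (FV x)) q) p' ->
  exists c, isBinder x c /\ Sub c phi /\ p' = Pos M v (NF c) q.
Proof.
  intros Hm; inversion Hm; subst.
  - eexists; split; [left; eauto|split; [eassumption|reflexivity]].
  - eexists; split; [right; eauto|split; [eassumption|reflexivity]].
Qed.

Section Inf.
Variable f : nat -> position Vr M.
Hypothesis Hinf : infinite_run phi w0 f.

Lemma inf_var N : exists i, N <= i /\ isVarPos (f i).
Proof.
  apply NNPP; intros Hn.
  assert (H : forall k, meas (f (N + k)) + k <= meas (f N)).
  { induction k; [rewrite !Nat.add_0_r; lia|].
    assert (Hv : ~ isVarPos (f (N + k))) by (intros Hv; apply Hn; exists (N + k); split; [lia|exact Hv]).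
    pose proof (meas_dec (proj2 Hinf (N + k)) Hv) as Hd.
    replace (N + S k) with (S (N + k)) by lia; lia. }
  specialize (H (S (meas (f N)))); lia.
Qed.

Lemma regen_info i c : regen f i c -> exists v q x, f i = Pos M v (NF (FV x)) q /\
  f (S i) = Pos M v (NF c) q /\ isBinder x c /\ Sub c phi.
Proof.
  intros [v [q [x [H1 [H2 H3]]]]]. exists v, q, x; split; auto; split; auto.
  pose proof (proj2 Hinf i) as Hm. rewrite H1, H2 in Hm.
  destruct (var_move Hm) as [c' [Hb [Hs E]]]. inversion E; subst; auto.
Qed.

Lemma var_regen i : isVarPos (f i) -> exists c x, regen f i c /\ isBinder x c /\ Sub c phi.
Proof.
  intros Hv. pose proof (proj2 Hinf i) as Hm. revert Hv Hm.
  destruct (f i) as [v n q] eqn:E; intros Hv Hm.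
  destruct n as [a| |]; simpl in Hv; try contradiction; destruct a; simpl in Hv; try contradiction.
  destruct (var_move Hm) as [c [Hb [Hs E']]].
  exists c, x; split; auto.
  exists v, q, x; split; auto; split; auto.
Qed.

Lemma only_inf l : exists N, forall x c i, In x l -> isBinder x c -> Sub c phi ->
  N <= i -> regen f i c -> infRegen f c.
Proof.
  induction l as [|x l [N IH]].
  - exists 0; intros x c i [].
  - destruct (classic (exists c, isBinder x c /\ Sub c phi /\ ~ infRegen f c)) as [[c [Hb [Hs Hni]]]|Hall].
    + unfold infRegen in Hni. apply not_all_ex_not in Hni as [n Hn].
      exists (Nat.max N n). intros y c' i [<-|Hy] Hb' Hs' Hi Hr.
      * rewrite (bind_unique Hnd Hb' Hb Hs' Hs) in Hr |- *.
        exfalso; apply Hn; exists i; split; auto; lia.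
      * apply (IH y c' i); auto; lia.
    + exists N. intros y c' i [<-|Hy] Hb' Hs' Hi Hr.
      * apply NNPP; intros Hn; apply Hall; exists c'; auto.
      * apply (IH y c' i); auto.
Qed.

Lemma max_nat (P : nat -> Prop) B : (exists n, P n) -> (forall n, P n -> n <= B) ->
  exists m, P m /\ forall n, P n -> n <= m.
Proof.
  induction B; intros [n Hn] HB.
  - exists n; split; auto. intros k Hk; pose proof (HB k Hk); pose proof (HB n Hn); lia.
  - destruct (classic (P (S B))) as [H|H].
    + exists (S B); split; auto.
    + apply IHB; eauto. intros k Hk. specialize (HB k Hk).
      destruct (Nat.eq_dec k (S B)); subst; [contradiction|lia].
Qed.

Lemma scope y c c' : Sub (FV y) c -> Sub c phi -> isBinder y c' -> Sub c' phi ->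
  Sub c' c \/ size c < size c'.
Proof.
  intros H1 H2 H3 H4.
  destruct (var_occ H1) as [Hf|[c'' [Hb Hs]]].
  - destruct (free_encl H2 Hf) as [Hf'|[d [a [E [Hd Hca]]]]].
    + exfalso; apply (Hsent Hf').
    + assert (Hbd : isBinder y d) by (destruct E; [left|right]; eauto).
      rewrite <- (bind_unique Hnd Hbd H3 Hd H4). right.
      apply Sub_size in Hca. destruct E; subst; simpl; lia.
  - left. rewrite <- (bind_unique Hnd Hb H3 (Sub_trans Hs H2) H4); auto.
Qed.

Lemma only_inf_all : exists N, forall i c, N <= i -> regen f i c -> infRegen f c.
Proof.
  destruct (only_inf L) as [N HN]. exists N. intros i c Hi Hr.
  destruct (regen_info Hr) as [v [q [x [_ [_ [Hb Hs]]]]]].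
  eapply HN; eauto. eapply binder_in; eauto.
Qed.

Lemma tail_setup : exists c i0, infRegen f c /\ regen f i0 c /\ Sub c phi /\
  (forall j, S i0 <= j -> Sub (nodeF (f j)) c) /\
  (forall j c', S i0 <= j -> regen f j c' -> Sub c' c) /\
  (forall c', infRegen f c' -> Sub c' c).
Proof.
  destruct only_inf_all as [N HN].
  destruct (@max_nat (fun n => exists c, infRegen f c /\ Sub c phi /\ size c = n) (size phi))
    as [m [[cs [Hcs [Hss Hsz]]] Hmax]].
  - destruct (inf_var N) as [i [Hi Hv]].
    destruct (var_regen _ Hv) as [c [x [Hr [Hb Hs]]]].
    exists (size c), c; split; auto; eapply HN; eauto.
  - intros n [c [_ [Hs <-]]]. apply Sub_size; auto.
  - assert (Hmax' : forall c, infRegen f c -> size c <= size cs).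
    { intros c Hc. rewrite Hsz. apply Hmax. exists c; split; auto.
      destruct (Hc 0) as [i [_ Hr]]. destruct (regen_info Hr) as [v [q [x [_ [_ [_ Hs]]]]]]; auto. }
    destruct (Hcs N) as [i0 [Hi0 Hr0]].
    assert (Hreg : forall j c', N <= j -> regen f j c' -> Sub (nodeF (f j)) cs -> Sub c' cs).
    { intros j c' Hj Hr Hin.
      destruct (regen_info Hr) as [v [q [x [E1 [E2 [Hb Hs]]]]]].
      rewrite E1 in Hin; simpl in Hin.
      destruct (scope Hin Hss Hb Hs) as [H|H]; auto.
      specialize (Hmax' c' (HN j c' Hj Hr)); lia. }
    assert (Hin : forall d, Sub (nodeF (f (S i0 + d))) cs).
    { induction d.
      - rewrite Nat.add_0_r. destruct (regen_info Hr0) as [v [q [x [_ [E2 _]]]]].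
        rewrite E2; simpl; constructor.
      - replace (S i0 + S d) with (S (S i0 + d)) by lia.
        destruct (classic (isVarPos (f (S i0 + d)))) as [Hv|Hv].
        + destruct (var_regen _ Hv) as [c' [x [Hr [Hb Hs]]]].
          destruct (regen_info Hr) as [v [q [x' [E1 [E2 _]]]]].
          rewrite E2; simpl. apply (Hreg (S i0 + d) c'); [lia|exact Hr|exact IHd].
        + eapply Sub_trans; [|exact IHd]. apply child_sub; auto. apply (proj2 Hinf). }
    assert (Hin' : forall j, S i0 <= j -> Sub (nodeF (f j)) cs).
    { intros j Hj. replace j with (S i0 + (j - S i0)) by lia. apply Hin. }
    exists cs, i0; split; auto; split; auto; split; auto; split; auto; split.
    + intros j c' Hj Hr. apply (Hreg j c'); [lia|exact Hr|apply Hin'; auto].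
    + intros c' Hc'. destruct (Hc' (S i0)) as [j [Hj Hr]].
      apply (Hreg j c'); [lia|exact Hr|apply Hin'; auto].
Qed.

Hypothesis Hcons : forall i, ownsPos phi (f i) pl -> f (S i) = strat (f i).
Hypothesis HG0 : Gp (init M phi w0).

Lemma inv_all i : reachable phi w0 (f i) /\ Gp (f i).
Proof.
  apply (@run_inv f (S i) (proj1 Hinf) HG0); [intros; apply (proj2 Hinf) | intros; apply Hcons; auto | lia].
Qed.

Lemma sig_le p (rho : env) : Gp p -> cons rho -> good rho p -> leL L (sig p) rho.
Proof. intros HG Hc Hg; apply (proj2 (proj2 (sig_spec HG))); auto. Qed.

Lemma before_inner c c' Y psi Z l0 r l1 r1 : Sub c phi -> Sub c' c -> c' <> c ->
  (c = FMu Y psi \/ c = FNu Y psi) -> isBinder Z c' ->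
  L = l1 ++ Z :: r1 -> L = l0 ++ Y :: r -> forall y, In y (l0 ++ [Y]) -> In y l1.
Proof.
  intros Hs Hs' Hne E Hb HL1 HL0 y Hy.
  assert (Hsub : Sub c' psi).
  { apply Sub_inv in Hs' as [H|H]; [contradiction|]. destruct E; subst; auto. }
  assert (HZ : In Z (binders psi)) by (eapply binder_in; eauto).
  destruct (before_lemma Z E Hs HZ) as [m1 [m2 [HL HY]]].
  pose proof Hnd as Hnd1. rewrite HL1 in Hnd1. rewrite HL1 in HL.
  destruct (split_unique _ _ _ _ _ Hnd1 HL) as [<- _].
  destruct (in_split _ _ HY) as [a [b El1]].
  assert (HL2 : L = a ++ Y :: (b ++ Z :: r1)) by (rewrite HL1, El1, <- app_assoc; reflexivity).
  pose proof Hnd as Hnd2. rewrite HL0 in Hnd2. rewrite HL0 in HL2.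
  destruct (split_unique _ _ _ _ _ Hnd2 HL2) as [<- _].
  rewrite El1. apply in_app_or in Hy as [Hy|[<-|[]]]; apply in_or_app; simpl; auto.
Qed.

Lemma outer_nonprog c i0 : infRegen f c -> regen f i0 c -> Sub c phi ->
  (forall j, S i0 <= j -> Sub (nodeF (f j)) c) -> ~ progressB c.
Proof.
  intros Hinfc Hr0 Hsc Hin P.
  destruct (regen_info Hr0) as [v0 [q0 [Y [_ [E0 [HbY _]]]]]].
  destruct (binder_shape HbY) as [psi E].
  assert (HYL : In Y L) by (eapply binder_in; eauto).
  destruct (in_split _ _ HYL) as [l0 [r HL]].
  set (Pre := l0 ++ [Y]).
  assert (HLP : L = Pre ++ r) by (unfold Pre; rewrite HL, <- app_assoc; reflexivity).
  set (A := fun j => exists v q, f j = Pos M v (NF c) q).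
  set (s := fun j => sig (f j)).
  assert (Hpsi : size psi < size c) by (destruct E; subst; simpl; lia).
  assert (nextBody : forall j v q, f j = Pos M v (NF c) q -> f (S j) = Pos M v (NF psi) q).
  { intros j v q Ej. pose proof (proj2 Hinf j) as Hm. rewrite Ej in Hm.
    destruct E; subst; inversion Hm; auto. }
  assert (notA_body : forall j v q, f j = Pos M v (NF psi) q -> ~ A j).
  { intros j v q Ej [v' [q' Ej']]. rewrite Ej in Ej'. inversion Ej'; subst; lia. }
  assert (prevVar : forall j, S i0 <= j -> A (S j) ->
            exists v q, f j = Pos M v (NF (FV Y)) q /\ f (S j) = Pos M v (NF c) q).
  { intros j Hj [v [q Ej]].
    pose proof (proj2 Hinf j) as Hm. rewrite Ej in Hm.
    destruct (classic (isVarPos (f j))) as [Hv|Hv].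
    - revert Hv Hm. destruct (f j) as [v' n q'] eqn:Efj; intros Hv Hm.
      destruct n as [a| |]; simpl in Hv; try contradiction; destruct a; simpl in Hv; try contradiction.
      destruct (var_move Hm) as [c' [Hb [_ E']]].
      assert (c' = c) by congruence; subst c'.
      rewrite (binder_var Hb HbY). exists v', q'. split; [reflexivity|congruence].
    - exfalso. pose proof (child_NF_size Hm Hv). pose proof (Sub_size (Hin j Hj)). lia. }
  assert (F1 : forall j, S i0 <= j -> ~ A j -> leL Pre (s (S j)) (s j)).
  { intros j Hj HnA. destruct (inv_all j) as [Hr HG].
    pose proof (proj2 Hinf j) as Hm.
    assert (Hsg : forall rho, cons rho -> good rho (f (S j)) -> leL Pre (s (S j)) rho).
    { intros rho Hc Hg. apply (@leL_prefix Pre r). rewrite <- HLP.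
      unfold s. apply sig_le; auto. apply (inv_all (S j)). }
    destruct (classic (isBinPos (f j))) as [Hb|Hb].
    - unfold s at 2. revert Hb Hr HG Hm HnA. generalize (Hin j Hj). unfold A.
      destruct (f j) as [v n q] eqn:Efj; intros Hinj Hb Hr HG Hm HnA.
      destruct n as [c'| |]; simpl in Hb; try contradiction.
      destruct c' as [| | | | | | | |Z a|Z a]; simpl in Hb; try contradiction.
      all: simpl in Hinj.
      all: match goal with |- context [sig (Pos M ?vv (NF ?cc) ?qq)] =>
             assert (E' : cc = FMu Z a \/ cc = FNu Z a) by auto;
             assert (Hne : cc <> c) by (intros Heq; apply HnA; exists vv, qq; rewrite Heq; reflexivity);
             assert (HbZ : isBinder Z cc) by (destruct E' as [E'|E']; [left|right]; eauto);
             pose proof (occ_Sub (reach_occ Hr)) as Hscc; simpl in Hscc;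
             destruct (classic (progressB cc)) as [P'|nP']
           end.
      all: try (destruct (@step_bin_nonprog _ _ _ _ _ _ Hr HG Hm E' nP') as [_ Hg];
                apply Hsg; auto; apply (sig_spec HG); fail).
      all: assert (HZL : In Z L) by (eapply binder_in; eauto);
           destruct (in_split _ _ HZL) as [l1 [r1 HL1]];
           destruct (@step_bin_prog _ _ _ _ _ _ l1 r1 Hr HG Hm E' P' HL1) as [_ [rho' [Hc' [Hag Hg']]]];
           eapply leL_trans; [apply Hsg; eauto|];
           right; intros y Hy _; apply Hag; exact (@before_inner c _ Y psi Z l0 r l1 r1 Hsc Hinj Hne E HbZ HL1 HL y Hy).
    - unfold s. apply Hsg; [apply (sig_spec HG)|].
      eapply step_nonbin; eauto. }
  assert (F2 : forall j, S i0 <= j -> A (S j) -> ltL Pre (s (S (S j))) (s j)).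
  { intros j Hj HA. destruct (prevVar j Hj HA) as [v [q [Ej Ej1]]].
    pose proof (nextBody _ _ _ Ej1) as Ej2.
    destruct (inv_all j) as [_ HG]. destruct (sig_spec HG) as [Hc [Hg _]].
    destruct (inv_all (S j)) as [Hr1 _]. pose proof (reach_occ Hr1) as Ho. rewrite Ej1 in Ho.
    rewrite Ej in Hg, Hc. unfold s at 2. rewrite Ej.
    destruct (@two_step _ v c Y psi q l0 r Hc E Hsc P Ho HL Hg) as [rho'' [Hc'' [Hlt Hg'']]].
    apply (@leL_ltL Pre _ rho''); auto.
    apply (@leL_prefix Pre r). rewrite <- HLP. unfold s. apply sig_le; auto.
    - apply (inv_all (S (S j))).
    - rewrite Ej2; auto. }
  assert (F3 : forall j, S i0 <= j -> A (S j) -> ~ A j).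
  { intros j Hj HA [v [q Ej]]. destruct (prevVar j Hj HA) as [v' [q' [Ej' _]]].
    rewrite Ej in Ej'; injection Ej' as _ Ec _; rewrite Ec in E; destruct E; discriminate. }
  destruct (@least_lex Pre r (fun rho => exists j, S i0 <= j /\ ~ A j /\ rho = s j) HLP)
    as [m [[k [Hk [HkA ->]]] Hmin]].
  - intros rho [j [_ [_ ->]]]. apply (sig_spec (proj2 (inv_all j))).
  - exists (s (S (S i0))). exists (S (S i0)); split; [lia|split; auto].
    eapply notA_body. apply nextBody. exact E0.
  - assert (chain : forall d j, j <= k + d -> k <= j -> ~ A j -> leL Pre (s j) (s k)).
    { induction d; intros j H1 H2 H3.
      - replace j with k by lia. right; apply eqL_refl.
      - destruct (Nat.le_gt_cases j (k + d)) as [Hle|Hgt]; [apply IHd; auto|].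
        replace j with (S (k + d)) in * by lia.
        destruct (classic (A (k + d))) as [HA|HnA].
        + destruct (k + d) as [|j''] eqn:Ekd; [exfalso; lia|].
          assert (j'' >= k).
          { destruct (Nat.eq_dec (S j'') k) as [Eq|Neq]; [rewrite <- Eq in HkA; contradiction|lia]. }
          left. apply (@ltL_leL Pre _ (s j'')).
          * apply F2; auto; lia.
          * apply IHd; [lia|lia|]. apply F3; auto; lia.
        + eapply leL_trans; [apply F1; auto; lia|]. apply IHd; auto; lia. }
    destruct (Hinfc k) as [t [Ht Hrt]].
    destruct (regen_info Hrt) as [vt [qt [xt [Et [Et1 _]]]]].
    assert (HAt : A (S t)) by (exists vt, qt; auto).
    assert (Hlt : ltL Pre (s (S (S t))) (s k)).
    { apply (@ltL_leL Pre _ (s t)); [apply F2; auto; lia|].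
      apply chain with (d := t - k); [lia|lia|]. apply F3; auto; lia. }
    assert (Hle : leL Pre (s k) (s (S (S t)))).
    { apply Hmin. exists (S (S t)); split; [lia|split; auto].
      eapply notA_body. apply nextBody. exact Et1. }
    apply (@ltL_irrefl Pre (s k)); exact (@leL_ltL Pre _ _ _ Hle Hlt).
Qed.

Lemma inf_win : wins_infinite phi w0 pl f.
Proof.
  destruct tail_setup as [c [i0 [Hic [Hr0 [Hsc [Hin [_ Hout]]]]]]].
  pose proof (outer_nonprog Hic Hr0 Hsc Hin) as nP.
  exists c; split; [split; auto|].
  destruct (regen_info Hr0) as [v [q [Y [_ [E1 [Hb _]]]]]].
  destruct (inv_all (S i0)) as [Hr _]. rewrite E1 in Hr.
  pose proof (reach_occ Hr) as Ho; simpl in Ho.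
  unfold progressB in nP.
  assert (Hpl : pl = PI \/ pl = PII) by (destruct pl; auto).
  destruct Hpl as [Epl|Epl]; rewrite Epl in nP |- *; simpl in *.
  - exists v, q; split; auto.
    destruct Hb as [[a ->]|[a ->]]; destruct q.
    + exfalso; apply nP; exists Ver; split; auto; left; simpl; auto.
    + right; split; eauto.
    + left; split; eauto.
    + exfalso; apply nP; exists Ref; split; auto; right; simpl; auto.
  - intros [v' [q' [Hr' [[Eq [x [a Ec]]]|[Eq [x [a Ec]]]]]]]; subst q';
    pose proof (reach_occ Hr') as Ho'; simpl in Ho'; apply nP.
    + exists Ver; split; auto; right; rewrite Ec; simpl; auto.
    + exists Ref; split; auto; left; rewrite Ec; simpl; auto.
Qed.

End Inf.

Theorem win_strat : Gp (init M phi w0) -> winning_strategy phi w0 pl strat.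
Proof.
  intros HG0. split; [apply strat_for|split].
  - intros g n Hrun Hc. apply finite_win; auto.
  - intros g Hinf Hc. apply inf_win; auto.
Qed.

End Player.
End Main.

Lemma pos_ok_of_reach (Pr Vr : Type) (M : CKmodel Pr) (phi : form Pr Vr) (w0 : W M) (p : position Vr M) :
  mu_formula phi -> NoDup (binders phi) -> sentence phi -> reachable phi w0 p -> pos_ok phi p.
Proof.
  intros Hmu Hnd Hs Hr. pose proof (reach_occ Hmu Hnd Hs Hr) as H.
  destruct p as [v n q]; destruct n; simpl in *; eapply occ_Sub; eauto.
Qed.

Lemma own_dual (Pr Vr : Type) (M : CKmodel Pr) (phi : form Pr Vr) (p : position Vr M) :
  ownsPos phi p PII <-> ~ ownsPos phi p PI.
Proof.
  destruct p as [v n q]; unfold ownsPos; simpl.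
  destruct (classic (verOwned phi (Pos M v n q))); destruct q;
  assert (Ref <> Ver) by discriminate; assert (Ver <> Ref) by discriminate;
  assert (Ver = Ver) by reflexivity; assert (Ref = Ref) by reflexivity; tauto.
Qed.

Lemma ex_least (P : nat -> Prop) : (exists n, P n) -> exists n, P n /\ forall m, m < n -> ~ P m.
Proof.
  intros [n Hn]. revert Hn. induction n as [n IH] using lt_wf_ind. intros Hn.
  destruct (classic (exists m, m < n /\ P m)) as [[m [Hm Pm]]|H].
  - apply (IH m Hm Pm).
  - exists n; split; auto. intros m Hm Pm; apply H; eauto.
Qed.

Lemma not_both (Pr Vr : Type) (M : CKmodel Pr) (phi : form Pr Vr) (w0 : W M) :
  mu_formula phi -> NoDup (binders phi) -> sentence phi ->
  has_winning_strategy M phi w0 PI -> has_winning_strategy M phi w0 PII -> False.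
Proof.
  intros Hmu Hnd Hs [s1 [S1 [F1 I1]]] [s2 [S2 [F2 I2]]].
  set (next := fun p => if excluded_middle_informative (ownsPos phi p PI) then s1 p else s2 p).
  set (f := fix g (n : nat) : position Vr M := match n with 0 => init M phi w0 | S k => next (g k) end).
  assert (Ef : forall i, f (S i) = next (f i)) by reflexivity.
  assert (Hnext : forall p, reachable phi w0 p -> (exists p', move phi p p') -> move phi p (next p)).
  { intros p Hr Hex. unfold next. destruct (excluded_middle_informative _) as [H|H].
    - apply S1; auto. eapply pos_ok_of_reach; eauto.
    - apply S2; auto; [eapply pos_ok_of_reach; eauto| apply own_dual; auto]. }
  assert (Hc1 : forall i, ownsPos phi (f i) PI -> f (S i) = s1 (f i)).
  { intros i H. rewrite Ef. unfold next. destruct (excluded_middle_informative _); [auto|contradiction]. }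
  assert (Hc2 : forall i, ownsPos phi (f i) PII -> f (S i) = s2 (f i)).
  { intros i H. rewrite Ef. unfold next.
    destruct (excluded_middle_informative _) as [H'|H']; [apply own_dual in H; contradiction|auto]. }
  destruct (classic (forall i, exists p', move phi (f i) p')) as [Hall|Hnot].
  - assert (Hmv : forall i, reachable phi w0 (f i) /\ move phi (f i) (f (S i))).
    { induction i.
      - assert (Hr : reachable phi w0 (f 0)) by (simpl; constructor).
        split; [auto|]. rewrite Ef; apply Hnext; auto.
      - destruct IHi as [Hr Hm].
        assert (Hr' : reachable phi w0 (f (S i))) by (econstructor; eauto).
        split; [auto|]. rewrite (Ef (S i)); apply Hnext; auto. }
    assert (Hrun : infinite_run phi w0 f) by (split; [reflexivity| intros i; apply Hmv]).
    destruct (I1 f Hrun Hc1) as [c1 [[R1 O1] W1]].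
    destruct (I2 f Hrun Hc2) as [c2 [[R2 O2] W2]].
    assert (c1 = c2) by (apply Sub_antisym; auto).
    subst c2. simpl in W1, W2. contradiction.
  - destruct (ex_least (fun n => ~ exists p', move phi (f n) p')) as [n [Hn Hlt]].
    { apply not_all_ex_not in Hnot; auto. }
    assert (Hmv : forall j, j <= n -> reachable phi w0 (f j) /\ (j < n -> move phi (f j) (f (S j)))).
    { induction j; intros Hj.
      - assert (Hr : reachable phi w0 (f 0)) by (simpl; constructor).
        split; [auto|]. intros Hj'. rewrite Ef; apply Hnext; auto.
        apply NNPP; apply Hlt; auto.
      - destruct IHj as [Hr Hm]; [lia|].
        assert (Hr' : reachable phi w0 (f (S j))) by (econstructor; eauto; apply Hm; lia).
        split; [auto|]. intros Hj'. rewrite (Ef (S j)); apply Hnext; auto.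
        apply NNPP; apply Hlt; auto. }
    assert (Hfr : finite_run phi w0 f n).
    { split; [reflexivity|split].
      - intros i Hi; apply Hmv; lia.
      - intros p Hp; apply Hn; eauto. }
    pose proof (F1 f n Hfr (fun i _ H => Hc1 i H)) as W1.
    pose proof (F2 f n Hfr (fun i _ H => Hc2 i H)) as W2.
    unfold wins_finite in W1, W2. apply W2, own_dual; auto.
Qed.

Theorem mainTheorem4 (Pr Vr : Type) (M : CKmodel Pr) (w : W M) (phi : form Pr Vr) :
  mu_formula phi -> well_named phi -> sentence phi ->
  (has_winning_strategy M phi w PI <-> sat M w phi) /\
  (has_winning_strategy M phi w PII <-> ~ sat M w phi).
Proof.
  intros Hmu [_ Hnd] Hs.
  assert (Hsat : forall rho : env Vr M, sem rho phi w <-> sat M w phi).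
  { intros rho. unfold sat. apply sem_ext. intros x Hx; exfalso; apply (Hs x Hx). }
  assert (WI : sat M w phi -> has_winning_strategy M phi w PI).
  { intros H. exists (strat phi PI). apply (win_strat Hmu Hnd Hs).
    destruct (cons_exists M Hnd Hs PI) as [rho Hc]. exists rho; split; auto.
    simpl. apply Hsat; auto. }
  assert (WII : ~ sat M w phi -> has_winning_strategy M phi w PII).
  { intros H. exists (strat phi PII). apply (win_strat Hmu Hnd Hs).
    destruct (cons_exists M Hnd Hs PII) as [rho Hc]. exists rho; split; auto.
    simpl. rewrite Hsat; auto. }
  split; split; auto.
  - intros H1. apply NNPP; intros H2. exact (not_both Hmu Hnd Hs H1 (WII H2)).
  - intros H1 H2. exact (not_both Hmu Hnd Hs (WI H2) H1).
Qed.
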